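(* For multi-indices $\alpha,\beta$ there is $C=C(\alpha,\beta,\iota,\Omega)$ such that for every smooth function $f$ on $\Omega$ and $k=1,2,3$, $$\Big|\partial^\alpha\bar\partial^\beta\big(\sigma^{-\iota}\partial_k(\sigma^{\iota+1}f)\big)-\sigma^{-\iota-|\alpha|}\partial_k\big(\sigma^{\iota+|\alpha|+1}\partial^\alpha\bar\partial^\beta f\big)\Big|\le C\sum_{0\le j\le|\beta|-1}\Big(\sigma|\partial^{|\alpha|+1}\bar\partial^jf|+|\partial^{|\alpha|}\bar\partial^jf|\Big)+C|\alpha|\sum_{0\le j\le|\beta|+1}|\partial^{|\alpha|-1}\bar\partial^jf| .$$
   Context: $\iota>0$ is a fixed real number ($\iota=1/(\gamma-1)$, $\gamma>1$). $\underline A,\underline B>0$, $\Omega\subset\mathbb R^3$ is the open ball centered at $0$ of radius $\sqrt{\underline A/\underline B}$, $\sigma(y)=\underline A-\underline B|y|^2$. $\partial_k=\partial/\partial y_k$; $\bar\partial_i=\epsilon^{ijk}y_j\partial_k$; $\partial^\alpha,\bar\partial^\beta$ multi-index powers; for integers $a,b\ge0$, $|\partial^a\bar\partial^bf|=\sum_{|\alpha'|=a,|\beta'|=b}|\partial^{\alpha'}\bar\partial^{\beta'}f|$ (empty sums are $0$). *)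

(* Defs.v *)
From Stdlib Require Import Reals List ClassicalEpsilon.
Import ListNotations.
Open Scope R_scope.

(* Points of R^3; coordinates indexed 1,2,3 as in the paper. *)
Definition pt := (R * R * R)%type.

Definition coord (y : pt) (i : nat) : R :=
  match y with (a, b, c) =>
    match i with 1%nat => a | 2%nat => b | 3%nat => c | _ => 0 end end.

Definition shift (y : pt) (k : nat) (t : R) : pt :=
  match y with (a, b, c) =>
    match k with
    | 1%nat => (a + t, b, c) | 2%nat => (a, b + t, c) | 3%nat => (a, b, c + t)
    | _ => (a, b, c) end end.

(* partial derivative d/dy_k (the derivative value, chosen classically;
   it is the genuine partial derivative wherever that exists) *)
Definition pd (k : nat) (f : pt -> R) : pt -> R :=
  fun y => epsilon (inhabits 0)
             (fun l => derivable_pt_lim (fun t => f (shift y k t)) 0 l).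

Definition levi (i j k : nat) : R :=
  match i, j, k with
  | 1%nat, 2%nat, 3%nat => 1 | 2%nat, 3%nat, 1%nat => 1 | 3%nat, 1%nat, 2%nat => 1
  | 1%nat, 3%nat, 2%nat => -1 | 3%nat, 2%nat, 1%nat => -1 | 2%nat, 1%nat, 3%nat => -1
  | _, _, _ => 0 end.

Definition idx3 : list nat := [1%nat; 2%nat; 3%nat].

Definition sumR {A : Type} (F : A -> R) (l : list A) : R :=
  fold_right (fun a acc => F a + acc) 0 l.

Definition pdbar (i : nat) (f : pt -> R) : pt -> R :=
  fun y => sumR (fun j => sumR (fun k => levi i j k * coord y j * pd k f y) idx3) idx3.

Definition mindex := (nat * nat * nat)%type.
Definition msize (a : mindex) : nat := let '(a1, a2, a3) := a in (a1 + a2 + a3)%nat.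

Definition pow_op (D : (pt -> R) -> (pt -> R)) (n : nat) (f : pt -> R) := Nat.iter n D f.

Definition pd_multi (a : mindex) (f : pt -> R) : pt -> R :=
  let '(a1, a2, a3) := a in pow_op (pd 1) a1 (pow_op (pd 2) a2 (pow_op (pd 3) a3 f)).
Definition pdbar_multi (b : mindex) (f : pt -> R) : pt -> R :=
  let '(b1, b2, b3) := b in
  pow_op (pdbar 1) b1 (pow_op (pdbar 2) b2 (pow_op (pdbar 3) b3 f)).

Definition mixed (a b : mindex) (f : pt -> R) : pt -> R := pd_multi a (pdbar_multi b f).

Definition mindices (n : nat) : list mindex :=
  flat_map (fun i => map (fun j => (i, j, (n - i - j)%nat)) (seq 0 (S (n - i))))
           (seq 0 (S n)).

(* |partial^a bar-partial^b f|(y) = sum over |a'|=a, |b'|=b *)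
Definition abs_mixed (a b : nat) (f : pt -> R) (y : pt) : R :=
  sumR (fun al => sumR (fun be => Rabs (mixed al be f y)) (mindices b)) (mindices a).

Definition normsq (y : pt) : R := coord y 1 ^ 2 + coord y 2 ^ 2 + coord y 3 ^ 2.

Definition sig_ (A B : R) (y : pt) : R := A - B * normsq y.

Definition in_Omega (A B : R) (y : pt) : Prop := normsq y < A / B.

Definition dist3 (y z : pt) : R :=
  sqrt ((coord y 1 - coord z 1) ^ 2 + (coord y 2 - coord z 2) ^ 2
        + (coord y 3 - coord z 3) ^ 2).

Definition iter_pd (l : list nat) (f : pt -> R) : pt -> R :=
  fold_right (fun k g => pd k g) f l.

Definition smooth_on (A B : R) (f : pt -> R) : Prop :=
  forall l : list nat,
    (forall y, in_Omega A B y -> forall k, (1 <= k <= 3)%nat ->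
       exists d, derivable_pt_lim (fun t => iter_pd l f (shift y k t)) 0 d) /\
    (forall y, in_Omega A B y -> forall e, 0 < e -> exists del, 0 < del /\
       forall z, in_Omega A B z -> dist3 z y < del ->
         Rabs (iter_pd l f z - iter_pd l f y) < e).

(* Main.v *)
Require Import Defs.
From Stdlib Require Import Reals List Lra Lia ClassicalEpsilon FunctionalExtensionality PropExtensionality.
From Coquelicot Require Import Coquelicot.
Import ListNotations.
Open Scope R_scope.

Definition idx (k:nat) := (1 <= k <= 3)%nat.
Definition EqOn (U:pt->Prop) (F G : pt -> R) := forall y, U y -> F y = G y.
Definition openU (U:pt->Prop) := forall y, U y -> exists d, 0<d /\ forall z,
  Rabs (coord z 1 - coord y 1) < d -> Rabs (coord z 2 - coord y 2) < d ->
  Rabs (coord z 3 - coord y 3) < d -> U z.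

Lemma idx_cases k : idx k -> k = 1%nat \/ k = 2%nat \/ k = 3%nat.
Proof. unfold idx; lia. Qed.

Lemma coord_shift y k t j : idx k -> idx j ->
  coord (shift y k t) j = coord y j + (if Nat.eqb j k then t else 0).
Proof.
  intros Hk Hj; destruct y as [[a b] c].
  destruct (idx_cases k Hk) as [?|[?|?]]; subst; destruct (idx_cases j Hj) as [?|[?|?]]; subst;
  simpl; ring.
Qed.

Lemma shift_nidx y k t : ~ idx k -> shift y k t = y.
Proof.
  intros H; destruct y as [[a b] c]; unfold idx in H.
  destruct k as [|[|[|[|k]]]]; simpl; auto; lia.
Qed.

Lemma pt_eq (y z : pt) : coord y 1 = coord z 1 -> coord y 2 = coord z 2 -> coord y 3 = coord z 3 -> y = z.
Proof. destruct y as [[a b] c], z as [[a' b'] c']; simpl; intros; subst; auto. Qed.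

Lemma shift_near U y k : openU U -> U y -> exists d, 0 < d /\ forall t, Rabs t < d -> U (shift y k t).
Proof.
  intros HU Hy. destruct (HU y Hy) as [d [Hd H]]. exists d; split; auto.
  intros s Hs. destruct (classic (idx k)) as [Hk|Hk].
  - apply H; rewrite coord_shift by (auto; unfold idx; lia);
    destruct (Nat.eqb _ k); (replace (coord y _ + s - coord y _) with s by ring) ||
      (replace (coord y _ + 0 - coord y _) with 0 by ring); auto; rewrite Rabs_R0; auto.
  - rewrite shift_nidx; auto.
Qed.

Lemma loc_of U y k (F G : pt -> R) : openU U -> U y -> EqOn U F G ->
  locally 0 (fun t => F (shift y k t) = G (shift y k t)).
Proof.
  intros HU Hy HE. destruct (shift_near U y k HU Hy) as [d [Hd H]].
  exists (mkposreal d Hd). intros t Ht. apply HE, H.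
  change (Rabs (t - 0) < d) in Ht. rewrite Rminus_0_r in Ht. exact Ht.
Qed.

Lemma dpl_loc U y k F G l : openU U -> U y -> EqOn U F G ->
  derivable_pt_lim (fun t => F (shift y k t)) 0 l -> derivable_pt_lim (fun t => G (shift y k t)) 0 l.
Proof.
  intros HU Hy HE H. apply is_derive_Reals. apply is_derive_Reals in H.
  eapply is_derive_ext_loc; [|exact H]. apply (loc_of U y k F G HU Hy HE).
Qed.

Lemma pd_spec F y k l : derivable_pt_lim (fun t => F (shift y k t)) 0 l -> pd k F y = l.
Proof.
  intros H. unfold pd.
  assert (Hex : exists l, derivable_pt_lim (fun t => F (shift y k t)) 0 l) by eauto.
  pose proof (epsilon_spec (inhabits 0) _ Hex) as H2.
  eapply uniqueness_limite; eauto.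
Qed.

Lemma pd_loc U F G k y : openU U -> EqOn U F G -> U y -> pd k F y = pd k G y.
Proof.
  intros HU HE Hy. unfold pd. f_equal. apply functional_extensionality; intro l.
  apply propositional_extensionality; split; intro H.
  - eapply dpl_loc; eauto.
  - eapply dpl_loc; eauto. intros z Hz; symmetry; auto.
Qed.

Lemma pd_EqOn U F G k : openU U -> EqOn U F G -> EqOn U (pd k F) (pd k G).
Proof. intros HU HE y Hy; eapply pd_loc; eauto. Qed.

Lemma iter_pd_EqOn U F G l : openU U -> EqOn U F G -> EqOn U (iter_pd l F) (iter_pd l G).
Proof. intros HU HE; induction l; simpl; auto. apply pd_EqOn; auto. Qed.

Lemma pdbar_EqOn U F G i : openU U -> EqOn U F G -> EqOn U (pdbar i F) (pdbar i G).
Proof.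
  intros HU HE y Hy; unfold pdbar. unfold sumR, idx3; simpl.
  repeat rewrite (pd_loc U F G _ y HU HE Hy). reflexivity.
Qed.

Definition Dv (U:pt->Prop) F := forall y k, U y -> idx k ->
  exists d, derivable_pt_lim (fun t => F (shift y k t)) 0 d.

Lemma pd_lim U F y k : Dv U F -> U y -> idx k ->
  derivable_pt_lim (fun t => F (shift y k t)) 0 (pd k F y).
Proof. intros HD Hy Hk; destruct (HD y k Hy Hk) as [d Hd]; rewrite (pd_spec _ _ _ _ Hd); auto. Qed.

Lemma Dv_ext U F G : openU U -> EqOn U F G -> Dv U F -> Dv U G.
Proof. intros HU HE HD y k Hy Hk; destruct (HD y k Hy Hk) as [d Hd]; exists d; eapply dpl_loc; eauto. Qed.

Lemma Dv_plus U F G : Dv U F -> Dv U G -> Dv U (fun z => F z + G z).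
Proof.
  intros HF HG y k Hy Hk. destruct (HF y k Hy Hk) as [d1 H1]; destruct (HG y k Hy Hk) as [d2 H2].
  exists (d1+d2). apply (derivable_pt_lim_plus (fun t => F (shift y k t)) (fun t => G (shift y k t))); auto.
Qed.

Lemma Dv_scal U F c : Dv U F -> Dv U (fun z => c * F z).
Proof.
  intros HF y k Hy Hk. destruct (HF y k Hy Hk) as [d1 H1].
  exists (c*d1). apply (derivable_pt_lim_scal (fun t => F (shift y k t))); auto.
Qed.

Lemma coord_line_lim y k j : idx k -> idx j ->
  derivable_pt_lim (fun t => coord (shift y k t) j) 0 (if Nat.eqb j k then 1 else 0).
Proof.
  intros Hk Hj.
  replace (fun t => coord (shift y k t) j) with (fun t => coord y j + (if Nat.eqb j k then t else 0)).
  2:{ apply functional_extensionality; intro t; rewrite coord_shift; auto. }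
  destruct (Nat.eqb j k).
  - replace 1 with (0 + 1) by ring. apply (derivable_pt_lim_plus (fun _ => coord y j) (fun t => t)).
    apply derivable_pt_lim_const. apply derivable_pt_lim_id.
  - replace 0 with (0 + 0) at 2 by ring. apply (derivable_pt_lim_plus (fun _ => coord y j) (fun t => 0)).
    apply derivable_pt_lim_const. apply derivable_pt_lim_const.
Qed.

Lemma Dv_coordmul U F j : idx j -> Dv U F -> Dv U (fun z => coord z j * F z).
Proof.
  intros Hj HF y k Hy Hk. destruct (HF y k Hy Hk) as [d1 H1].
  eexists. apply (derivable_pt_lim_mult (fun t => coord (shift y k t) j) (fun t => F (shift y k t))).
  apply coord_line_lim; auto. exact H1.
Qed.

Lemma Dv_const U c : Dv U (fun _ => c).
Proof. intros y k _ _; exists 0; apply derivable_pt_lim_const. Qed.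

Lemma sumR_cons {X} (F : X -> R) a l : sumR F (a::l) = F a + sumR F l.
Proof. reflexivity. Qed.
Lemma sumR_nil {X} (F : X -> R) : sumR F [] = 0.
Proof. reflexivity. Qed.
Lemma sumR_app {X} (F : X -> R) l1 l2 : sumR F (l1 ++ l2) = sumR F l1 + sumR F l2.
Proof. induction l1; simpl; [ring|]. unfold sumR in *; simpl. rewrite IHl1; ring. Qed.
Lemma sumR_map {X Y} (F : Y -> R) (g : X -> Y) l : sumR F (map g l) = sumR (fun x => F (g x)) l.
Proof. induction l; simpl; auto. unfold sumR in *; simpl; rewrite IHl; auto. Qed.
Lemma sumR_ext {X} (F G : X -> R) l : (forall x, In x l -> F x = G x) -> sumR F l = sumR G l.
Proof. induction l; intros H; simpl; auto. unfold sumR in *; simpl. rewrite (H a (or_introl eq_refl)), IHl; auto. intros; apply H; simpl; auto. Qed.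
Lemma sumR_plus {X} (F G : X -> R) l : sumR (fun x => F x + G x) l = sumR F l + sumR G l.
Proof. induction l; simpl; [ring|]. unfold sumR in *; simpl. rewrite IHl; ring. Qed.
Lemma sumR_scal {X} (F : X -> R) c l : sumR (fun x => c * F x) l = c * sumR F l.
Proof. induction l; simpl; [ring|]. unfold sumR in *; simpl. rewrite IHl; ring. Qed.
Lemma sumR_flat_map {X Y} (F : Y -> R) (g : X -> list Y) l : sumR F (flat_map g l) = sumR (fun x => sumR F (g x)) l.
Proof. induction l; simpl; auto. rewrite sumR_app, IHl; auto. Qed.

Lemma Dv_sumR {X} U (Fs : X -> pt -> R) l : (forall x, In x l -> Dv U (Fs x)) -> Dv U (fun z => sumR (fun x => Fs x z) l).
Proof.
  induction l; intros H; simpl. apply Dv_const.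
  apply Dv_plus; [apply H; simpl; auto| apply IHl; intros; apply H; simpl; auto].
Qed.

Lemma pd_plus U F G y k : Dv U F -> Dv U G -> U y -> idx k ->
  pd k (fun z => F z + G z) y = pd k F y + pd k G y.
Proof.
  intros HF HG Hy Hk. apply pd_spec.
  apply (derivable_pt_lim_plus (fun t => F (shift y k t)) (fun t => G (shift y k t))); eapply pd_lim; eauto.
Qed.

Lemma pd_scal U F c y k : Dv U F -> U y -> idx k -> pd k (fun z => c * F z) y = c * pd k F y.
Proof.
  intros HF Hy Hk. apply pd_spec.
  apply (derivable_pt_lim_scal (fun t => F (shift y k t))); eapply pd_lim; eauto.
Qed.

Lemma pd_const c y k : pd k (fun _ => c) y = 0.
Proof. apply pd_spec, derivable_pt_lim_const. Qed.

Lemma shift0 y k : shift y k 0 = y.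
Proof. destruct y as [[a b] c]; destruct k as [|[|[|[|k]]]]; simpl; auto; repeat rewrite Rplus_0_r; auto. Qed.

Lemma pd_coordmul U F j y k : Dv U F -> U y -> idx k -> idx j ->
  pd k (fun z => coord z j * F z) y = (if Nat.eqb j k then 1 else 0) * F y + coord y j * pd k F y.
Proof.
  intros HF Hy Hk Hj. apply pd_spec.
  pose proof (derivable_pt_lim_mult (fun t => coord (shift y k t) j) (fun t => F (shift y k t)) 0 _ _
     (coord_line_lim y k j Hk Hj) (pd_lim U F y k HF Hy Hk)) as H.
  simpl in H; rewrite shift0 in H; exact H.
Qed.

Lemma pd_sumR {X} U (Fs : X -> pt -> R) l y k : (forall x, In x l -> Dv U (Fs x)) -> U y -> idx k ->
  pd k (fun z => sumR (fun x => Fs x z) l) y = sumR (fun x => pd k (Fs x) y) l.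
Proof.
  induction l; intros H Hy Hk; simpl.
  - apply pd_const.
  - rewrite (pd_plus U); auto. unfold sumR in IHl |- *; simpl. rewrite IHl; auto.
    intros; apply H; simpl; auto. apply H; simpl; auto. apply Dv_sumR; intros; apply H; simpl; auto.
Qed.

Definition Sw (U:pt->Prop) F := forall y m n, U y -> idx m -> idx n -> pd m (pd n F) y = pd n (pd m F) y.
Definition Nice (U:pt->Prop) F := forall l, List.Forall idx l -> Dv U (iter_pd l F) /\ Sw U (iter_pd l F).

Lemma iter_pd_app l1 l2 F : iter_pd (l1 ++ l2) F = iter_pd l1 (iter_pd l2 F).
Proof. unfold iter_pd; apply fold_right_app. Qed.

Lemma Nice_of_rep U G (Rp : list nat -> pt -> R) : openU U ->
  (forall l, List.Forall idx l -> EqOn U (iter_pd l G) (Rp l)) ->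
  (forall l, List.Forall idx l -> Dv U (Rp l)) ->
  (forall l y m n, List.Forall idx l -> U y -> idx m -> idx n -> Rp (m::n::l) y = Rp (n::m::l) y) ->
  Nice U G.
Proof.
  intros HU HE HD HS l Hl. split.
  - apply (Dv_ext U (Rp l)); [exact HU| |apply HD; auto]. intros z Hz; symmetry; apply (HE l Hl z Hz).
  - intros y m n Hy Hm Hn. change (iter_pd (m::n::l) G y = iter_pd (n::m::l) G y).
    rewrite HE, HE by (auto; repeat constructor; auto). apply HS; auto.
Qed.

Lemma Nice_ext U F G : openU U -> EqOn U F G -> Nice U F -> Nice U G.
Proof.
  intros HU HE HN. apply (Nice_of_rep U G (fun l => iter_pd l F)); auto.
  - intros l _ z Hz. symmetry; apply (iter_pd_EqOn U F G l HU HE); auto.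
  - intros l Hl; apply HN; auto.
  - intros l y m n Hl Hy Hm Hn. apply HN; auto.
Qed.

Lemma Nice_pd U F k : Nice U F -> idx k -> Nice U (pd k F).
Proof.
  intros HN Hk l Hl. change (pd k F) with (iter_pd [k] F). rewrite <- iter_pd_app.
  apply HN. apply Forall_app; split; auto.
Qed.

Lemma Nice_Dv U F : Nice U F -> Dv U F.
Proof. intros HN; apply (HN []); constructor. Qed.

Lemma Nice_plus U F G : openU U -> Nice U F -> Nice U G -> Nice U (fun z => F z + G z).
Proof.
  intros HU HF HG. apply (Nice_of_rep U _ (fun l z => iter_pd l F z + iter_pd l G z)); auto.
  - induction l; intros Hl z Hz; simpl; auto.
    inversion Hl; subst. rewrite (pd_loc U _ _ a z HU (IHl H2) Hz).
    rewrite (pd_plus U); auto; [apply HF|apply HG]; auto.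
  - intros l Hl; apply Dv_plus; [apply HF|apply HG]; auto.
  - intros l y m n Hl Hy Hm Hn; simpl. f_equal; [apply HF|apply HG]; auto.
Qed.

Lemma Nice_scal U F c : openU U -> Nice U F -> Nice U (fun z => c * F z).
Proof.
  intros HU HF. apply (Nice_of_rep U _ (fun l z => c * iter_pd l F z)); auto.
  - induction l; intros Hl z Hz; simpl; auto.
    inversion Hl; subst. rewrite (pd_loc U _ _ a z HU (IHl H2) Hz).
    rewrite (pd_scal U); auto; apply HF; auto.
  - intros l Hl; apply Dv_scal; apply HF; auto.
  - intros l y m n Hl Hy Hm Hn; simpl. f_equal; apply HF; auto.
Qed.

Lemma Nice_const U c : openU U -> Nice U (fun _ => c).
Proof.
  intros HU. apply (Nice_of_rep U _ (fun l z => match l with [] => c | _ => 0 end)); auto.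
  - induction l; intros Hl z Hz; simpl; auto.
    inversion Hl; subst. rewrite (pd_loc U _ _ a z HU (IHl H2) Hz).
    destruct l; apply pd_const.
  - intros l Hl; destruct l; apply Dv_const.
Qed.

Fixpoint Rl (j : nat) (l : list nat) : list (list nat) :=
  match l with
  | [] => []
  | m :: l' => (if Nat.eqb m j then [l'] else []) ++ map (cons m) (Rl j l')
  end.

Lemma Rl_idx j l : List.Forall idx l -> forall l', In l' (Rl j l) -> List.Forall idx l'.
Proof.
  induction l; simpl; intros Hl l' H; [contradiction|]. inversion Hl; subst.
  apply in_app_or in H; destruct H as [H|H].
  - destruct (Nat.eqb a j); simpl in H; [destruct H as [H|[]]; subst; auto | contradiction].
  - apply in_map_iff in H; destruct H as [x [<- Hx]]. constructor; auto.
Qed.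

Lemma Nice_coordmul U F j : openU U -> idx j -> Nice U F -> Nice U (fun z => coord z j * F z).
Proof.
  intros HU Hj HF.
  apply (Nice_of_rep U _ (fun l z => coord z j * iter_pd l F z + sumR (fun l' => iter_pd l' F z) (Rl j l))); auto.
  - induction l; intros Hl z Hz; simpl; [unfold sumR; simpl; ring|].
    inversion Hl; subst. rewrite (pd_loc U _ _ a z HU (IHl H2) Hz).
    assert (HD: forall l', In l' (Rl j l) -> Dv U (iter_pd l' F)) by (intros; apply HF; eapply Rl_idx; eauto).
    rewrite (pd_plus U); auto.
    2:{ apply Dv_coordmul; auto; apply HF; auto. }
    2:{ apply (Dv_sumR U (fun l' => iter_pd l' F)); auto. }
    rewrite (pd_coordmul U); auto; [|apply HF; auto].
    rewrite (pd_sumR U (fun l' => iter_pd l' F)); auto.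
    rewrite sumR_app, sumR_map. simpl.
    rewrite Nat.eqb_sym. destruct (Nat.eqb a j); unfold sumR; simpl; ring.
  - intros l Hl. apply Dv_plus. apply Dv_coordmul; auto; apply HF; auto.
    apply (Dv_sumR U (fun l' => iter_pd l' F)). intros; apply HF; eapply Rl_idx; eauto.
  - intros l y m n Hl Hy Hm Hn. simpl.
    repeat rewrite sumR_app, sumR_map. repeat rewrite sumR_app, sumR_map. simpl.
    assert (E1: iter_pd (m::n::l) F y = iter_pd (n::m::l) F y) by (apply HF; auto).
    simpl in E1. rewrite E1.
    assert (E2: sumR (fun x => pd m (pd n (iter_pd x F)) y) (Rl j l) = sumR (fun x => pd n (pd m (iter_pd x F)) y) (Rl j l)).
    { apply sumR_ext; intros x Hx; apply HF; auto; eapply Rl_idx; eauto. }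
    rewrite E2. destruct (Nat.eqb m j), (Nat.eqb n j); unfold sumR; simpl; ring.
Qed.

Lemma Nice_sumR {X} U (Fs : X -> pt -> R) l : openU U -> (forall x, In x l -> Nice U (Fs x)) ->
  Nice U (fun z => sumR (fun x => Fs x z) l).
Proof.
  intros HU; induction l; intros H; simpl. apply Nice_const; auto.
  apply Nice_plus; auto. apply H; simpl; auto. apply IHl; intros; apply H; simpl; auto.
Qed.

Lemma Nice_pdbar U F i : openU U -> Nice U F -> Nice U (pdbar i F).
Proof.
  intros HU HF. unfold pdbar.
  apply (Nice_sumR U (fun j z => sumR (fun k => levi i j k * coord z j * pd k F z) idx3)); auto.
  intros j Hj. apply (Nice_sumR U (fun k z => levi i j k * coord z j * pd k F z)); auto.
  intros k Hk.
  assert (idx j /\ idx k) as [Hj' Hk'] by (unfold idx3 in *; simpl in *; unfold idx; intuition lia).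
  apply (Nice_ext U (fun z => levi i j k * (coord z j * pd k F z))); auto.
  intros z _; ring.
  apply Nice_scal; auto. apply Nice_coordmul; auto. apply Nice_pd; auto.
Qed.

Lemma shift_add p k a b : shift (shift p k a) k b = shift p k (a+b).
Proof.
  destruct (classic (idx k)) as [Hk|Hk].
  - apply pt_eq; repeat rewrite coord_shift by (auto; unfold idx; lia);
    destruct (Nat.eqb _ k); ring.
  - repeat rewrite shift_nidx; auto.
Qed.

Lemma shift_comm p m n a b : shift (shift p m a) n b = shift (shift p n b) m a.
Proof.
  destruct (classic (idx m)) as [Hm|Hm]; [|repeat rewrite (shift_nidx _ m) by auto; auto].
  destruct (classic (idx n)) as [Hn|Hn]; [|repeat rewrite (shift_nidx _ n) by auto; auto].
  apply pt_eq; repeat rewrite coord_shift by (auto; unfold idx; lia);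
    destruct (Nat.eqb _ m), (Nat.eqb _ n); ring.
Qed.

Lemma line_derive U H q k s : Dv U H -> U (shift q k s) -> idx k ->
  is_derive (fun z => H (shift q k z)) s (pd k H (shift q k s)).
Proof.
  intros HD Hq Hk.
  pose proof (pd_lim U H (shift q k s) k HD Hq Hk) as H1.
  assert (E: derivable_pt_lim (comp (fun t => H (shift (shift q k s) k t)) (fun z => z - s)) s (pd k H (shift q k s) * 1)).
  { apply derivable_pt_lim_comp.
    - replace 1 with (1 - 0) by ring. apply (derivable_pt_lim_minus (fun z => z) (fun _ => s)).
      apply derivable_pt_lim_id. apply derivable_pt_lim_const.
    - replace (s - s) with 0 by ring. exact H1. }
  rewrite Rmult_1_r in E.
  replace (comp (fun t => H (shift (shift q k s) k t)) (fun z => z - s)) with (fun z => H (shift q k z)) in E.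
  2:{ apply functional_extensionality; intro z; unfold comp; rewrite shift_add; f_equal; f_equal; ring. }
  apply is_derive_Reals. exact E.
Qed.

Definition Cont (U : pt -> Prop) F := forall y, U y -> forall e, 0 < e -> exists del, 0 < del /\
  forall z, U z -> dist3 z y < del -> Rabs (F z - F y) < e.

Lemma sq_lt a e : Rabs a < e -> a ^ 2 < e ^ 2.
Proof. intros H. rewrite <- pow2_abs. assert (0 <= Rabs a) by apply Rabs_pos. nra. Qed.

Lemma dist3_lt z y e : 0 < e -> (forall i, idx i -> Rabs (coord z i - coord y i) < e) -> dist3 z y < 2 * e.
Proof.
  intros He H. unfold dist3.
  assert (H1 := sq_lt _ _ (H 1%nat ltac:(unfold idx; lia))).
  assert (H2 := sq_lt _ _ (H 2%nat ltac:(unfold idx; lia))).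
  assert (H3 := sq_lt _ _ (H 3%nat ltac:(unfold idx; lia))).
  rewrite <- (sqrt_pow2 (2*e)) by lra. apply sqrt_lt_1_alt. split.
  - repeat apply Rplus_le_le_0_compat; apply pow2_ge_0.
  - nra.
Qed.

Lemma P_close y m n u v e : idx m -> idx n -> m <> n -> 0 < e -> Rabs u < e -> Rabs v < e ->
  forall i, idx i -> Rabs (coord (shift (shift y m u) n v) i - coord y i) < e.
Proof.
  intros Hm Hn Hmn He Hu Hv i Hi. repeat rewrite coord_shift by auto.
  destruct (Nat.eqb i m) eqn:E1, (Nat.eqb i n) eqn:E2.
  - apply Nat.eqb_eq in E1, E2; lia.
  - replace (coord y i + u + 0 - coord y i) with u by ring; auto.
  - replace (coord y i + 0 + v - coord y i) with v by ring; auto.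
  - replace (coord y i + 0 + 0 - coord y i) with 0 by ring; rewrite Rabs_R0; auto.
Qed.

Lemma locally_of (P : R -> Prop) x d : 0 < d -> (forall z, Rabs (z - x) < d -> P z) -> locally x P.
Proof. intros Hd H. exists (mkposreal d Hd). intros z Hz. apply H. exact Hz. Qed.

Lemma schwarz_core U G y m n : openU U -> Dv U G -> Dv U (pd n G) -> Dv U (pd m G) ->
  Cont U (pd m (pd n G)) -> Cont U (pd n (pd m G)) -> U y -> idx m -> idx n ->
  pd m (pd n G) y = pd n (pd m G) y.
Proof.
  intros HU HG HGn HGm Cmn Cnm Hy Hm Hn.
  destruct (Nat.eq_dec m n) as [<-|Hmn]; [reflexivity|].
  destruct (HU y Hy) as [d [Hd HUd]].
  set (P := fun u v => shift (shift y m u) n v).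
  assert (HP : forall u v, Rabs u < d -> Rabs v < d -> U (P u v)).
  { intros u v Hu Hv. apply HUd; apply P_close; auto; unfold idx; lia. }
  set (phi := fun u v => G (P u v)).
  assert (F1 : forall u v, Rabs u < d -> Rabs v < d -> is_derive (fun t => phi u t) v (pd n G (P u v))).
  { intros u v Hu Hv. apply (line_derive U G (shift y m u) n v); auto. apply HP; auto. }
  assert (F2 : forall u v, Rabs u < d -> Rabs v < d -> is_derive (fun t => phi t v) u (pd m G (P u v))).
  { intros u v Hu Hv. unfold phi, P.
    apply (is_derive_ext (fun t => G (shift (shift y n v) m t))).
    { intro t; rewrite shift_comm; auto. }
    rewrite shift_comm. apply (line_derive U G (shift y n v) m u); auto.
    rewrite <- shift_comm; apply HP; auto. }
  assert (F3 : forall u v, Rabs u < d/2 -> Rabs v < d/2 ->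
     is_derive (fun z => Derive (fun t => phi z t) v) u (pd m (pd n G) (P u v))).
  { intros u v Hu Hv.
    apply (is_derive_ext_loc (fun z => pd n G (shift (shift y n v) m z))).
    - apply (locally_of _ u (d/2)); [lra|]. intros z Hz.
      assert (Rabs z < d). { assert (Rabs z <= Rabs (z - u) + Rabs u) by
        (replace z with ((z - u) + u) at 1 by ring; apply Rabs_triang). lra. }
      transitivity (pd n G (P z v)). { unfold P; rewrite shift_comm; auto. }
      symmetry; apply is_derive_unique; apply F1; lra.
    - unfold P; rewrite shift_comm. apply (line_derive U (pd n G) (shift y n v) m u); auto.
      rewrite <- shift_comm; apply HP; lra. }
  assert (F4 : forall u v, Rabs u < d/2 -> Rabs v < d/2 ->
     is_derive (fun z => Derive (fun t => phi t z) u) v (pd n (pd m G) (P u v))).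
  { intros u v Hu Hv.
    apply (is_derive_ext_loc (fun z => pd m G (shift (shift y m u) n z))).
    - apply (locally_of _ v (d/2)); [lra|]. intros z Hz.
      assert (Rabs z < d). { assert (Rabs z <= Rabs (z - v) + Rabs v) by
        (replace z with ((z - v) + v) at 1 by ring; apply Rabs_triang). lra. }
      symmetry; apply is_derive_unique; apply F2; lra.
    - apply (line_derive U (pd m G) (shift y m u) n v); auto. apply HP; lra. }
  assert (P00 : P 0 0 = y) by (unfold P; rewrite !shift0; auto).
  assert (Hd2 : 0 < d/2) by lra.
  assert (R0 : Rabs 0 < d/2) by (rewrite Rabs_R0; lra).
  pose proof (Schwarz phi 0 0) as HS.
  rewrite <- P00.
  rewrite <- (is_derive_unique _ _ _ (F3 0 0 R0 R0)), <- (is_derive_unique _ _ _ (F4 0 0 R0 R0)).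
  apply HS; clear HS.
  - exists (mkposreal _ Hd2); simpl. intros u v Hu Hv. rewrite Rminus_0_r in Hu, Hv.
    repeat split.
    + eexists; apply F2; lra.
    + eexists; apply F1; lra.
    + eexists; apply F3; auto.
    + eexists; apply F4; auto.
  - intros eps. destruct (Cmn y Hy eps (cond_pos eps)) as [del [Hdel Hc]].
    assert (Hmin : 0 < Rmin (d/2) (del/2)) by (apply Rmin_pos; lra).
    exists (mkposreal _ Hmin); simpl. intros u v Hu Hv. rewrite Rminus_0_r in Hu, Hv.
    assert (Rmin (d/2) (del/2) <= d/2) by apply Rmin_l.
    assert (Rmin (d/2) (del/2) <= del/2) by apply Rmin_r.
    replace (Derive (fun z : R => Derive (fun t : R => phi z t) v) u) with (pd m (pd n G) (P u v)) by (symmetry; apply is_derive_unique; apply F3; lra).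
    replace (Derive (fun z : R => Derive (fun t : R => phi z t) 0) 0) with (pd m (pd n G) (P 0 0)) by (symmetry; apply is_derive_unique; apply F3; auto).
    rewrite P00.
    apply Hc. apply HP; lra.
    assert (dist3 (P u v) y < 2 * Rmin (d/2) (del/2)) by
      (apply dist3_lt; auto; intros; apply P_close; auto).
    lra.
  - intros eps. destruct (Cnm y Hy eps (cond_pos eps)) as [del [Hdel Hc]].
    assert (Hmin : 0 < Rmin (d/2) (del/2)) by (apply Rmin_pos; lra).
    exists (mkposreal _ Hmin); simpl. intros u v Hu Hv. rewrite Rminus_0_r in Hu, Hv.
    assert (Rmin (d/2) (del/2) <= d/2) by apply Rmin_l.
    assert (Rmin (d/2) (del/2) <= del/2) by apply Rmin_r.
    replace (Derive (fun z : R => Derive (fun t : R => phi t z) u) v) with (pd n (pd m G) (P u v)) by (symmetry; apply is_derive_unique; apply F4; lra).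
    replace (Derive (fun z : R => Derive (fun t : R => phi t z) 0) 0) with (pd n (pd m G) (P 0 0)) by (symmetry; apply is_derive_unique; apply F4; auto).
    rewrite P00.
    apply Hc. apply HP; lra.
    assert (dist3 (P u v) y < 2 * Rmin (d/2) (del/2)) by
      (apply dist3_lt; auto; intros; apply P_close; auto).
    lra.
Qed.

Lemma Nice_smooth U f : openU U ->
  (forall l, Dv U (iter_pd l f) /\ Cont U (iter_pd l f)) -> Nice U f.
Proof.
  intros HU H l Hl. split. apply H.
  intros y m n Hy Hm Hn.
  exact (schwarz_core U (iter_pd l f) y m n HU (proj1 (H l)) (proj1 (H (n::l))) (proj1 (H (m::l)))
    (proj2 (H (m::n::l))) (proj2 (H (n::m::l))) Hy Hm Hn).
Qed.

Lemma sq_diff_bound a e d : 0 < d <= 1 -> Rabs (e - a) < d -> e ^ 2 - a ^ 2 <= d * (1 + 2 * Rabs a).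
Proof.
  intros Hd H. set (h := e - a). replace e with (a + h) by (unfold h; ring).
  assert (Rabs h < d) by auto.
  assert (h^2 <= d). { rewrite <- pow2_abs. assert (0 <= Rabs h) by apply Rabs_pos. nra. }
  assert (2 * a * h <= 2 * Rabs a * d).
  { assert (a * h <= Rabs a * Rabs h). { rewrite <- Rabs_mult. apply Rle_abs. }
    assert (0 <= Rabs a) by apply Rabs_pos. nra. }
  nra.
Qed.

Lemma open_Omega A B : openU (in_Omega A B).
Proof.
  intros y Hy. unfold in_Omega in *.
  set (g := A / B - normsq y). set (S := Rabs (coord y 1) + Rabs (coord y 2) + Rabs (coord y 3)).
  assert (Hg : 0 < g) by (unfold g; lra).
  assert (HS : 0 <= S) by (unfold S; pose proof (Rabs_pos (coord y 1)); pose proof (Rabs_pos (coord y 2)); pose proof (Rabs_pos (coord y 3)); lra).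
  set (d := Rmin 1 (g / (6 * (1 + 2 * S)))).
  assert (Hq : 0 < g / (6 * (1 + 2 * S))) by (apply Rdiv_lt_0_compat; lra).
  assert (Hd : 0 < d) by (apply Rmin_pos; lra).
  exists d; split; auto. intros z H1 H2 H3.
  assert (d <= 1) by apply Rmin_l. assert (Hd2 : d <= g / (6 * (1 + 2 * S))) by apply Rmin_r.
  pose proof (sq_diff_bound _ _ d ltac:(lra) H1). pose proof (sq_diff_bound _ _ d ltac:(lra) H2).
  pose proof (sq_diff_bound _ _ d ltac:(lra) H3).
  assert (d * (6 * (1 + 2 * S)) <= g).
  { apply Rmult_le_compat_r with (r := 6 * (1 + 2*S)) in Hd2; [|lra].
    unfold Rdiv in Hd2. rewrite Rmult_assoc, Rinv_l in Hd2 by lra. lra. }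
  assert (d * (1 + 2 * Rabs (coord y 1)) + d * (1 + 2 * Rabs (coord y 2)) + d * (1 + 2 * Rabs (coord y 3)) < d * (6 * (1 + 2 * S))).
  { unfold S. pose proof (Rabs_pos (coord y 1)); pose proof (Rabs_pos (coord y 2)); pose proof (Rabs_pos (coord y 3)).
    assert (0 <= d * (Rabs (coord y 1) + Rabs (coord y 2) + Rabs (coord y 3))) by (apply Rmult_le_pos; lra). lra. }
  unfold normsq, g in *. unfold normsq in H6. lra.
Qed.

Lemma Nice_f A B f : smooth_on A B f -> Nice (in_Omega A B) f.
Proof.
  intros H. apply Nice_smooth. apply open_Omega.
  intros l; destruct (H l) as [H1 H2]; split.
  - intros y k Hy Hk; apply H1; auto.
  - intros y Hy e He; destruct (H2 y Hy e He) as [del [Hdel Hc]]; exists del; split; auto.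
Qed.

Inductive op := OD (m:nat) | OB (i:nat).
Definition opf (o:op) (F : pt -> R) : pt -> R := match o with OD m => pd m F | OB i => pdbar i F end.
Fixpoint apw (w : list op) (F : pt -> R) : pt -> R :=
  match w with [] => F | o :: w' => opf o (apw w' F) end.
Definition opok (o:op) := match o with OD m => idx m | OB i => idx i end.
Definition wok (w : list op) := List.Forall opok w.

Lemma app_app w1 w2 F : apw (w1 ++ w2) F = apw w1 (apw w2 F).
Proof. induction w1; simpl; auto. rewrite IHw1; auto. Qed.

Lemma opf_EqOn U o F G : openU U -> EqOn U F G -> EqOn U (opf o F) (opf o G).
Proof. destruct o; simpl; intros; [apply pd_EqOn|apply pdbar_EqOn]; auto. Qed.

Lemma app_EqOn U w F G : openU U -> EqOn U F G -> EqOn U (apw w F) (apw w G).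
Proof. induction w; simpl; auto. intros; apply opf_EqOn; auto. Qed.

Lemma Nice_opf U o F : openU U -> opok o -> Nice U F -> Nice U (opf o F).
Proof. destruct o; simpl; intros; [apply Nice_pd|apply Nice_pdbar]; auto. Qed.

Lemma Nice_app U w F : openU U -> wok w -> Nice U F -> Nice U (apw w F).
Proof. induction w; simpl; auto. intros HU Hw HF; inversion Hw; subst. apply Nice_opf; auto. Qed.

Inductive kd := KC | KY (j:nat) | KS.
Definition kv (A B : R) (k : kd) (y : pt) : R :=
  match k with KC => 1 | KY j => coord y j | KS => sig_ A B y end.
Definition kok (k : kd) := match k with KY j => idx j | _ => True end.
Definition dkv (B : R) (k : kd) (m : nat) (y : pt) : R :=
  match k with KC => 0 | KY j => if Nat.eqb j m then 1 else 0 | KS => -2 * B * coord y m end.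

Lemma sig_line_lim A B y m : idx m ->
  derivable_pt_lim (fun t => sig_ A B (shift y m t)) 0 (-2 * B * coord y m).
Proof.
  intros Hm. apply is_derive_Reals. destruct y as [[a b] c].
  destruct (idx_cases m Hm) as [?|[?|?]]; subst; unfold sig_, normsq; simpl;
  auto_derive; auto; ring.
Qed.

Lemma kv_line_lim A B k y m : kok k -> idx m ->
  derivable_pt_lim (fun t => kv A B k (shift y m t)) 0 (dkv B k m y).
Proof.
  intros Hk Hm. destruct k; simpl in *.
  - apply derivable_pt_lim_const.
  - apply coord_line_lim; auto.
  - apply sig_line_lim; auto.
Qed.

Lemma pd_term U A B c k H y m : Dv U H -> U y -> idx m -> kok k ->
  pd m (fun z => c * kv A B k z * H z) y = c * (dkv B k m y * H y + kv A B k y * pd m H y).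
Proof.
  intros HD Hy Hm Hk.
  replace (fun z => c * kv A B k z * H z) with (fun z => c * (kv A B k z * H z))
    by (apply functional_extensionality; intro; ring).
  apply pd_spec. apply derivable_pt_lim_scal.
  pose proof (derivable_pt_lim_mult (fun t => kv A B k (shift y m t)) (fun t => H (shift y m t)) 0 _ _
     (kv_line_lim A B k y m Hk Hm) (pd_lim U H y m HD Hy Hm)) as E.
  simpl in E; rewrite shift0 in E; exact E.
Qed.

Lemma Nice_sigmul U A B H : openU U -> Nice U H -> Nice U (fun z => sig_ A B z * H z).
Proof.
  intros HU HH.
  apply (Nice_ext U (fun z => A * H z + ((-B) * (coord z 1 * (coord z 1 * H z)) +
     ((-B) * (coord z 2 * (coord z 2 * H z)) + (-B) * (coord z 3 * (coord z 3 * H z)))))); auto.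
  { intros z _; unfold sig_, normsq; ring. }
  assert (I1: idx 1) by (unfold idx; lia). assert (I2: idx 2) by (unfold idx; lia).
  assert (I3: idx 3) by (unfold idx; lia).
  repeat apply Nice_plus; auto; apply Nice_scal; auto; repeat apply Nice_coordmul; auto.
Qed.

Lemma Nice_term U A B c k H : openU U -> kok k -> Nice U H -> Nice U (fun z => c * kv A B k z * H z).
Proof.
  intros HU Hk HH.
  apply (Nice_ext U (fun z => c * (kv A B k z * H z))); [auto| intros z _; ring |].
  apply Nice_scal; auto. destruct k; simpl in *.
  - apply (Nice_ext U H); auto. intros z _; ring.
  - apply Nice_coordmul; auto.
  - apply Nice_sigmul; auto.
Qed.

Definition term := (R * kd * list op)%type.
Definition tval (A B : R) (f : pt -> R) (t : term) (y : pt) : R :=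
  let '(c, k, w) := t in c * kv A B k y * apw w f y.
Definition TLval A B f (TL : list term) (y : pt) : R := sumR (fun t => tval A B f t y) TL.
Definition tok (t : term) := let '(c, k, w) := t in kok k /\ wok w.

Lemma Nice_tval U A B f t : openU U -> tok t -> Nice U f -> Nice U (tval A B f t).
Proof.
  intros HU Ht Hf. destruct t as [[c k] w]; destruct Ht. unfold tval.
  apply Nice_term; auto. apply Nice_app; auto.
Qed.

Lemma sumR_swap {X Y} (F : X -> Y -> R) l1 l2 :
  sumR (fun a => sumR (fun b => F a b) l2) l1 = sumR (fun b => sumR (fun a => F a b) l1) l2.
Proof.
  induction l1; simpl.
  - induction l2; simpl; auto. unfold sumR in *; simpl; rewrite <- IHl2; ring.
  - change (sumR (fun b => F a b) l2 + sumR (fun a0 => sumR (fun b => F a0 b) l2) l1 =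
      sumR (fun b => F a b + sumR (fun a0 => F a0 b) l1) l2).
    rewrite IHl1, sumR_plus. reflexivity.
Qed.

Lemma pdbar_sumR {X} U (Fs : X -> pt -> R) l y i : (forall x, In x l -> Dv U (Fs x)) -> U y ->
  pdbar i (fun z => sumR (fun x => Fs x z) l) y = sumR (fun x => pdbar i (Fs x) y) l.
Proof.
  intros HD Hy. unfold pdbar.
  rewrite (sumR_ext _ (fun j => sumR (fun k => sumR (fun x => levi i j k * coord y j * pd k (Fs x) y) l) idx3)).
  2:{ intros j Hj. apply sumR_ext. intros k Hk.
      assert (idx k) by (unfold idx3 in Hk; simpl in Hk; unfold idx; intuition lia).
      rewrite (pd_sumR U); auto. rewrite sumR_scal; auto. }
  rewrite (sumR_ext _ (fun j => sumR (fun x => sumR (fun k => levi i j k * coord y j * pd k (Fs x) y) idx3) l)).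
  2:{ intros; apply sumR_swap. }
  rewrite sumR_swap. reflexivity.
Qed.

Lemma opf_sumR {X} U o (Fs : X -> pt -> R) l y : opok o -> (forall x, In x l -> Dv U (Fs x)) -> U y ->
  opf o (fun z => sumR (fun x => Fs x z) l) y = sumR (fun x => opf o (Fs x) y) l.
Proof. destruct o; simpl; intros; [apply (pd_sumR U)|apply (pdbar_sumR U)]; auto. Qed.

Definition dT (B : R) (o : op) (t : term) : list term :=
  let '(c, k, w) := t in
  match o, k with
  | OD m, KC => [(c, KC, OD m :: w)]
  | OD m, KY j => [(c, KY j, OD m :: w); (if Nat.eqb j m then c else 0, KC, w)]
  | OD m, KS => [(c, KS, OD m :: w); (-2 * B * c, KY m, w)]
  | OB i, KC => [(c, KC, OB i :: w)]
  | OB i, KY j => (c, KY j, OB i :: w) :: map (fun l => (c * levi i l j, KY l, w)) idx3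
  | OB i, KS => [(c, KS, OB i :: w)]
  end.

Lemma dT_ok B o t : opok o -> tok t -> List.Forall tok (dT B o t).
Proof.
  intros Ho Ht. destruct t as [[c k] w]; destruct Ht as [Hk Hw].
  assert (I1: idx 1) by (unfold idx; lia). assert (I2: idx 2) by (unfold idx; lia).
  assert (I3: idx 3) by (unfold idx; lia).
  destruct o, k; unfold idx3; simpl in *;
  repeat (apply List.Forall_cons); try apply List.Forall_nil; simpl;
  try (split; [auto|]); try (apply List.Forall_cons; [exact Ho|]); auto.
Qed.

Lemma pdbar_term U A B c k H y i : Dv U H -> U y -> idx i -> kok k ->
  pdbar i (fun z => c * kv A B k z * H z) y =
  c * (sumR (fun j => sumR (fun l => levi i j l * coord y j * dkv B k l y) idx3) idx3 * H y + kv A B k y * pdbar i H y).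
Proof.
  intros HD Hy Hi Hk. unfold pdbar.
  rewrite (sumR_ext _ (fun j => sumR (fun l => levi i j l * coord y j * (c * (dkv B k l y * H y + kv A B k y * pd l H y))) idx3)).
  2:{ intros j Hj; apply sumR_ext; intros l Hl.
      assert (idx l) by (unfold idx3 in Hl; simpl in Hl; unfold idx; intuition lia).
      rewrite (pd_term U); auto. }
  unfold sumR, idx3; simpl. ring.
Qed.

Lemma dT_correct U A B f o t y : openU U -> Nice U f -> opok o -> tok t -> U y ->
  opf o (tval A B f t) y = TLval A B f (dT B o t) y.
Proof.
  intros HU Hf Ho Ht Hy. destruct t as [[c k] w]; destruct Ht as [Hk Hw].
  assert (HD : Dv U (apw w f)) by (apply Nice_Dv, Nice_app; auto).
  unfold tval, TLval. destruct o; simpl in Ho |- *.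
  - rewrite (pd_term U); auto.
    destruct k; simpl; unfold sumR; simpl; [ring| |ring].
    destruct (Nat.eqb j m); ring.
  - rewrite (pdbar_term U); auto.
    destruct (idx_cases i Ho) as [?|[?|?]]; subst;
    destruct k; simpl in *; unfold sumR, idx3; simpl; try ring;
    destruct (idx_cases j Hk) as [?|[?|?]]; subst; simpl; ring.
Qed.

Fixpoint dTs (B : R) (w : list op) (TL : list term) : list term :=
  match w with [] => TL | o :: w' => flat_map (dT B o) (dTs B w' TL) end.

Lemma dTs_ok B w TL : wok w -> List.Forall tok TL -> List.Forall tok (dTs B w TL).
Proof.
  induction w; simpl; auto. intros Hw HT; inversion Hw; subst.
  apply Forall_forall; intros x Hx. apply in_flat_map in Hx; destruct Hx as [t [Ht Hx]].
  pose proof (IHw H2 HT) as H. rewrite Forall_forall in H.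
  pose proof (dT_ok B a t H1 (H t Ht)) as H'. rewrite Forall_forall in H'. auto.
Qed.

Lemma Dv_TL U A B f TL : openU U -> Nice U f -> List.Forall tok TL -> Dv U (TLval A B f TL).
Proof.
  intros HU Hf HT. unfold TLval. apply (Dv_sumR U (fun t => tval A B f t)).
  intros t Ht. apply Nice_Dv, Nice_tval; auto. rewrite Forall_forall in HT; auto.
Qed.

Lemma opf_TL U A B f o TL : openU U -> Nice U f -> opok o -> List.Forall tok TL ->
  EqOn U (opf o (TLval A B f TL)) (TLval A B f (flat_map (dT B o) TL)).
Proof.
  intros HU Hf Ho HT y Hy. unfold TLval at 1.
  rewrite (opf_sumR U o (fun t => tval A B f t)); auto.
  2:{ intros t Ht. apply Nice_Dv, Nice_tval; auto. rewrite Forall_forall in HT; auto. }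
  unfold TLval. rewrite sumR_flat_map. apply sumR_ext. intros t Ht.
  apply (dT_correct U); auto. rewrite Forall_forall in HT; auto.
Qed.

Lemma app_TL U A B f w TL : openU U -> Nice U f -> wok w -> List.Forall tok TL ->
  EqOn U (apw w (TLval A B f TL)) (TLval A B f (dTs B w TL)).
Proof.
  intros HU Hf. induction w; simpl; intros Hw HT y Hy; auto.
  inversion Hw; subst.
  rewrite (opf_EqOn U a _ _ HU (IHw H2 HT) y Hy).
  apply (opf_TL U); auto. apply dTs_ok; auto.
Qed.

Definition expB (i : nat) (w : list op) : list term :=
  flat_map (fun j => map (fun l => (levi i j l, KY j, OD l :: w)) idx3) idx3.

Lemma expB_ok i w : wok w -> List.Forall tok (expB i w).
Proof.
  intros Hw. unfold expB, idx3; simpl.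
  assert (I1: idx 1) by (unfold idx; lia). assert (I2: idx 2) by (unfold idx; lia).
  assert (I3: idx 3) by (unfold idx; lia).
  repeat (apply List.Forall_cons; [split; [auto| constructor; auto]|]); apply List.Forall_nil.
Qed.

Lemma expB_eq A B f i w y : apw (OB i :: w) f y = TLval A B f (expB i w) y.
Proof. unfold TLval, expB, tval, idx3; simpl. unfold pdbar, sumR, idx3; simpl. ring. Qed.

Lemma Sch U f w a b y : openU U -> Nice U f -> wok w -> U y -> idx a -> idx b ->
  apw (OD a :: OD b :: w) f y = apw (OD b :: OD a :: w) f y.
Proof.
  intros HU Hf Hw Hy Ha Hb. simpl.
  pose proof (Nice_app U w f HU Hw Hf [] (List.Forall_nil _)) as [_ HS]. apply HS; auto.
Qed.

Lemma PDB U f w j b y : openU U -> Nice U f -> wok w -> U y -> idx b ->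
  pd b (apw (OB j :: w) f) y = sumR (fun c => sumR (fun d => levi j c d *
     ((if Nat.eqb c b then 1 else 0) * apw (OD d :: w) f y + coord y c * apw (OD b :: OD d :: w) f y)) idx3) idx3.
Proof.
  intros HU Hf Hw Hy Hb.
  rewrite (pd_loc U _ (TLval 0 0 f (expB j w)) b y HU); auto.
  2:{ intros z Hz; apply expB_eq. }
  change (pd b (TLval 0 0 f (expB j w)) y) with (opf (OD b) (TLval 0 0 f (expB j w)) y).
  rewrite (opf_TL U 0 0 f (OD b) (expB j w) HU Hf Hb (expB_ok j w Hw) y Hy).
  unfold expB, TLval, tval, idx3; simpl. unfold sumR; simpl.
  destruct (idx_cases b Hb) as [?|[?|?]]; subst; simpl; ring.
Qed.

Ltac sch_rw U f w y :=
  let I1 := fresh in let I2 := fresh in let I3 := fresh in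
  assert (I1: idx 1) by (unfold idx; lia); assert (I2: idx 2) by (unfold idx; lia);
  assert (I3: idx 3) by (unfold idx; lia).

Lemma LV2 U f w i k y : openU U -> Nice U f -> wok w -> U y -> idx i -> idx k ->
  apw (OB i :: OD k :: w) f y = apw (OD k :: OB i :: w) f y - sumR (fun l => levi i k l * apw (OD l :: w) f y) idx3.
Proof.
  intros HU Hf Hw Hy Hi Hk.
  assert (I1: idx 1) by (unfold idx; lia); assert (I2: idx 2) by (unfold idx; lia);
  assert (I3: idx 3) by (unfold idx; lia).
  pose proof (fun a b Ha Hb => Sch U f w a b y HU Hf Hw Hy Ha Hb) as S.
  change (apw (OD k :: OB i :: w) f y) with (pd k (apw (OB i :: w) f) y).
  rewrite (PDB U f w i k y); auto.
  change (apw (OB i :: OD k :: w) f y) with (pdbar i (pd k (apw w f)) y).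
  unfold pdbar, sumR, idx3; simpl.
  pose proof (S 2%nat 1%nat I2 I1) as S21; pose proof (S 3%nat 1%nat I3 I1) as S31;
  pose proof (S 3%nat 2%nat I3 I2) as S32. simpl in S21, S31, S32.
  destruct (idx_cases i Hi) as [?|[?|?]]; destruct (idx_cases k Hk) as [?|[?|?]]; subst; simpl;
  rewrite ?S21, ?S31, ?S32; ring.
Qed.

Lemma LV1 f w m k y : idx m -> idx k ->
  sumR (fun n => levi n m k * apw (OB n :: w) f y) idx3 = coord y m * apw (OD k :: w) f y - coord y k * apw (OD m :: w) f y.
Proof.
  intros Hm Hk. simpl. unfold pdbar, sumR, idx3; simpl.
  destruct (idx_cases m Hm) as [?|[?|?]]; destruct (idx_cases k Hk) as [?|[?|?]]; subst; simpl; ring.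
Qed.

Lemma LB U f w i j y : openU U -> Nice U f -> wok w -> U y -> idx i -> idx j ->
  apw (OB i :: OB j :: w) f y = apw (OB j :: OB i :: w) f y - sumR (fun n => levi i j n * apw (OB n :: w) f y) idx3.
Proof.
  intros HU Hf Hw Hy Hi Hj.
  assert (I1: idx 1) by (unfold idx; lia); assert (I2: idx 2) by (unfold idx; lia);
  assert (I3: idx 3) by (unfold idx; lia).
  pose proof (fun a b Ha Hb => Sch U f w a b y HU Hf Hw Hy Ha Hb) as S.
  pose proof (S 2%nat 1%nat I2 I1) as S21; pose proof (S 3%nat 1%nat I3 I1) as S31;
  pose proof (S 3%nat 2%nat I3 I2) as S32. simpl in S21, S31, S32.
  assert (E1 : forall i j, idx i -> idx j -> apw (OB i :: OB j :: w) f y =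
     sumR (fun a => sumR (fun b => levi i a b * coord y a * sumR (fun c => sumR (fun d => levi j c d *
     ((if Nat.eqb c b then 1 else 0) * apw (OD d :: w) f y + coord y c * apw (OD b :: OD d :: w) f y)) idx3) idx3) idx3) idx3).
  { intros i' j' Hi' Hj'.
    change (apw (OB i' :: OB j' :: w) f y) with
      (sumR (fun a => sumR (fun b => levi i' a b * coord y a * pd b (apw (OB j' :: w) f) y) idx3) idx3).
    apply sumR_ext; intros a _; apply sumR_ext; intros b Hb. f_equal.
    apply (PDB U); auto. unfold idx3 in Hb; simpl in Hb; unfold idx; intuition lia. }
  rewrite (E1 i j Hi Hj), (E1 j i Hj Hi).
  unfold pdbar, sumR, idx3; simpl. unfold pdbar, sumR, idx3; simpl.
  destruct (idx_cases i Hi) as [?|[?|?]]; destruct (idx_cases j Hj) as [?|[?|?]]; subst; simpl;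
  rewrite ?S21, ?S31, ?S32; ring.
Qed.

Definition Dterm (iota B : R) (k : nat) (c : nat) (w : list op) : list term :=
  [((iota + INR c + 1) * (-2 * B), KY k, w); (1, KS, OD k :: w)].

Definition Em (iota B : R) (k c m : nat) (w : list op) : list term :=
  ((-2 * B) * (iota + INR c + 1) * (if Nat.eqb m k then 1 else 0), KC, w) ::
  map (fun n => (-2 * B * levi n m k, KC, OB n :: w)) idx3.

Definition Fi (iota B : R) (k i : nat) (w : list op) : list term :=
  map (fun j => ((iota + 1) * (-2 * B) * levi i j k, KY j, w)) idx3 ++
  map (fun l => (- levi i k l, KS, OD l :: w)) idx3.

Lemma Sem1 U iota A B f k c m W y : openU U -> Nice U f -> idx k -> idx m -> wok W -> U y ->
  TLval A B f (flat_map (dT B (OD m)) (Dterm iota B k c W)) y =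
  TLval A B f (Dterm iota B k (S c) (OD m :: W)) y + TLval A B f (Em iota B k c m W) y.
Proof.
  intros HU Hf Hk Hm HW Hy.
  assert (L1 : sumR (fun n => tval A B f (-2 * B * levi n m k, KC, OB n :: W) y) idx3 =
     -2 * B * (coord y m * apw (OD k :: W) f y - coord y k * apw (OD m :: W) f y)).
  { rewrite <- (LV1 f W m k y Hm Hk). rewrite <- sumR_scal. apply sumR_ext; intros n _.
    unfold tval, kv. ring. }
  pose proof (Sch U f W m k y HU Hf HW Hy Hm Hk) as S1.
  unfold TLval, Em. rewrite sumR_cons, sumR_map, L1.
  unfold Dterm. rewrite S_INR. simpl flat_map. unfold sumR, tval, kv. simpl fold_right.
  cbn [apw opf] in *. rewrite S1, (Nat.eqb_sym k m). destruct (Nat.eqb m k); ring.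
Qed.

Lemma Sem2 U iota A B f k i W y : openU U -> Nice U f -> idx k -> idx i -> wok W -> U y ->
  TLval A B f (flat_map (dT B (OB i)) (Dterm iota B k 0 W)) y =
  TLval A B f (Dterm iota B k 0 (OB i :: W)) y + TLval A B f (Fi iota B k i W) y.
Proof.
  intros HU Hf Hk Hi HW Hy.
  pose proof (LV2 U f W i k y HU Hf HW Hy Hi Hk) as L2.
  unfold TLval, Fi, Dterm. simpl flat_map. unfold sumR, idx3, tval, kv. simpl.
  cbn [apw opf] in *. rewrite L2. unfold sumR, idx3. simpl.
  destruct (idx_cases i Hi) as [?|[?|?]]; destruct (idx_cases k Hk) as [?|[?|?]]; subst; simpl; ring.
Qed.

Fixpoint nD (w : list op) : nat := match w with [] => 0 | OD _ :: w' => S (nD w') | OB _ :: w' => nD w' end.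
Fixpoint nB (w : list op) : nat := match w with [] => 0 | OB _ :: w' => S (nB w') | OD _ :: w' => nB w' end.

Lemma nD_app w1 w2 : nD (w1 ++ w2) = (nD w1 + nD w2)%nat.
Proof. induction w1 as [|[]]; simpl; auto. Qed.
Lemma nB_app w1 w2 : nB (w1 ++ w2) = (nB w1 + nB w2)%nat.
Proof. induction w1 as [|[]]; simpl; auto. Qed.
Lemma nD_mapD L : nD (map OD L) = length L.
Proof. induction L; simpl; auto. Qed.
Lemma nB_mapD L : nB (map OD L) = 0%nat.
Proof. induction L; simpl; auto. Qed.
Lemma nD_mapB L : nD (map OB L) = 0%nat.
Proof. induction L; simpl; auto. Qed.
Lemma nB_mapB L : nB (map OB L) = length L.
Proof. induction L; simpl; auto. Qed.

Lemma TLval_app A B f l1 l2 y : TLval A B f (l1 ++ l2) y = TLval A B f l1 y + TLval A B f l2 y.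
Proof. unfold TLval; apply sumR_app. Qed.

Lemma wok_app w1 w2 : wok w1 -> wok w2 -> wok (w1 ++ w2).
Proof. intros; apply Forall_app; auto. Qed.
Lemma wok_mapD L : List.Forall idx L -> wok (map OD L).
Proof. induction 1; simpl; constructor; auto. Qed.
Lemma wok_mapB L : List.Forall idx L -> wok (map OB L).
Proof. induction 1; simpl; constructor; auto. Qed.

Lemma Forall_flat_map_dT B o (P Q : term -> Prop) TL :
  (forall t, P t -> List.Forall Q (dT B o t)) -> List.Forall P TL -> List.Forall Q (flat_map (dT B o) TL).
Proof.
  intros H HP. induction HP; simpl; auto. apply Forall_app; auto.
Qed.

Definition shE (n : nat) (W : list op) (t : term) : Prop :=
  let '(_, kd, w) := t in kd = KC /\ (nD w + 1 = n + nD W)%nat /\ (nB w <= nB W + 1)%nat.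

Lemma dTs_Dterm_ok iota B k c W : idx k -> wok W -> List.Forall tok (Dterm iota B k c W).
Proof.
  intros Hk HW. unfold Dterm. constructor; [simpl; split; auto|].
  constructor; [simpl; split; [exact I| constructor; auto]|]. constructor.
Qed.

Lemma TeleD iota A B k : idx k -> forall L W c, List.Forall idx L -> wok W ->
  exists TL, List.Forall (shE (length L) W) TL /\ List.Forall tok TL /\
  forall U f, openU U -> Nice U f -> EqOn U (apw (map OD L) (TLval A B f (Dterm iota B k c W)))
      (fun z => TLval A B f (Dterm iota B k (c + length L) (map OD L ++ W)) z + TLval A B f TL z).
Proof.
  intros Hk. induction L as [|m L IH]; intros W c HL HW.
  - exists []. split; [constructor|split; [constructor|]]. intros U f HU Hf z Hz. simpl.
    rewrite Nat.add_0_r. unfold TLval; simpl. ring.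
  - inversion HL; subst. destruct (IH W c H2 HW) as [TL [Hsh [Hok HE]]].
    set (W' := map OD L ++ W).
    assert (HW' : wok W') by (apply wok_app; auto; apply wok_mapD; auto).
    exists (Em iota B k (c + length L) m W' ++ flat_map (dT B (OD m)) TL).
    split; [|split].
    + apply Forall_app; split.
      * unfold Em. constructor.
        -- simpl. unfold W'; rewrite nD_app, nD_mapD, nB_app, nB_mapD. repeat split; lia.
        -- apply Forall_map. apply Forall_forall. intros n _. simpl.
           unfold W'; rewrite nD_app, nD_mapD, nB_app, nB_mapD. repeat split; lia.
      * apply (Forall_flat_map_dT B (OD m) (fun t => shE (length L) W t /\ tok t)).
        -- intros [[c0 kd] w] [[Hkd [Ha Hb]] _]. subst kd. simpl. constructor; [|constructor].
           simpl. repeat split; lia.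
        -- apply Forall_forall; intros t Ht; rewrite Forall_forall in Hsh, Hok; auto.
    + apply Forall_app; split.
      * unfold Em. constructor. simpl; split; auto.
        apply Forall_map. apply Forall_forall. intros n Hn. simpl. split; auto.
        constructor; auto. unfold idx3 in Hn; simpl in Hn; simpl; unfold idx; intuition lia.
      * apply (Forall_flat_map_dT B (OD m) tok). intros; apply dT_ok; auto. auto.
    + intros U f HU Hf z Hz. change (apw (map OD (m :: L)) ?X) with (pd m (apw (map OD L) X)).
      rewrite (pd_loc U _ (TLval A B f (Dterm iota B k (c + length L) W' ++ TL)) m z HU); auto.
      2:{ intros z' Hz'. rewrite TLval_app. apply (HE U f HU Hf z' Hz'). }
      change (pd m (TLval A B f (Dterm iota B k (c + length L) W' ++ TL)) z) with
        (opf (OD m) (TLval A B f (Dterm iota B k (c + length L) W' ++ TL)) z).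
      rewrite (opf_TL U A B f (OD m)); auto.
      2:{ apply Forall_app; split; auto. apply dTs_Dterm_ok; auto. }
      rewrite flat_map_app, TLval_app, (Sem1 U); auto.
      rewrite !TLval_app. simpl length. rewrite Nat.add_succ_r.
      change (map OD (m :: L) ++ W) with (OD m :: W'). ring.
Qed.

Definition shF (n : nat) (W : list op) (t : term) : Prop :=
  let '(_, kd, w) := t in (nB w + 1 <= n + nB W)%nat /\
  match kd with KY _ => nD w = nD W | KS => nD w = S (nD W) | KC => False end.

Lemma TeleB iota A B k : idx k -> forall M W, List.Forall idx M -> wok W ->
  exists TL, List.Forall (shF (length M) W) TL /\ List.Forall tok TL /\
  forall U f, openU U -> Nice U f -> EqOn U (apw (map OB M) (TLval A B f (Dterm iota B k 0 W)))
      (fun z => TLval A B f (Dterm iota B k 0 (map OB M ++ W)) z + TLval A B f TL z).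
Proof.
  intros Hk. induction M as [|i M IH]; intros W HM HW.
  - exists []. split; [constructor|split; [constructor|]]. intros U f HU Hf z Hz. simpl.
    unfold TLval; simpl. ring.
  - inversion HM; subst. destruct (IH W H2 HW) as [TL [Hsh [Hok HE]]].
    set (W' := map OB M ++ W).
    assert (HW' : wok W') by (apply wok_app; auto; apply wok_mapB; auto).
    exists (Fi iota B k i W' ++ flat_map (dT B (OB i)) TL).
    split; [|split].
    + apply Forall_app; split.
      * unfold Fi. apply Forall_app; split; apply Forall_map; apply Forall_forall; intros n _; simpl;
        unfold W'; rewrite ?nD_app, ?nD_mapB, ?nB_app, ?nB_mapB; split; lia.
      * apply (Forall_flat_map_dT B (OB i) (fun t => shF (length M) W t /\ tok t)).
        -- intros [[c0 kd] w] [[Ha Hb] _]. destruct kd; unfold idx3; simpl in Hb |- *; try contradiction;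
           repeat (apply List.Forall_cons; [simpl; split; [lia|auto]|]); apply List.Forall_nil.
        -- apply Forall_forall; intros t Ht; rewrite Forall_forall in Hsh, Hok; auto.
    + apply Forall_app; split.
      * unfold Fi. apply Forall_app; split; apply Forall_map; apply Forall_forall; intros n Hn; simpl;
        (split; [unfold idx3 in Hn; simpl in Hn; try (unfold idx; intuition lia); auto|]);
        try constructor; auto; unfold idx3 in Hn; simpl in Hn; simpl; unfold idx; intuition lia.
      * apply (Forall_flat_map_dT B (OB i) tok). intros; apply dT_ok; auto. auto.
    + intros U f HU Hf z Hz. change (apw (map OB (i :: M)) ?X) with (pdbar i (apw (map OB M) X)).
      rewrite (pdbar_EqOn U _ (TLval A B f (Dterm iota B k 0 W' ++ TL)) i HU); auto.
      2:{ intros z' Hz'. rewrite TLval_app. apply (HE U f HU Hf z' Hz'). }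
      change (pdbar i (TLval A B f (Dterm iota B k 0 W' ++ TL)) z) with
        (opf (OB i) (TLval A B f (Dterm iota B k 0 W' ++ TL)) z).
      rewrite (opf_TL U A B f (OB i)); auto.
      2:{ apply Forall_app; split; auto. apply dTs_Dterm_ok; auto. }
      rewrite flat_map_app, TLval_app, (Sem2 U); auto.
      rewrite !TLval_app. change (map OB (i :: M) ++ W) with (OB i :: W'). ring.
Qed.

Definition shI (nb n : nat) (t : term) : Prop :=
  let '(_, kd, w) := t in (nB w + 1 <= nb)%nat /\
  match kd with KS => nD w = S n | KY _ => nD w = n | KC => (nD w + 1 = n)%nat end.

Lemma shI_dTs B nb L : forall n TL, List.Forall (shI nb n) TL ->
  List.Forall (shI nb (length L + n)) (dTs B (map OD L) TL).
Proof.
  induction L as [|m L IH]; intros n TL H; simpl; auto.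
  apply (Forall_flat_map_dT B (OD m) (shI nb (length L + n))); auto.
  intros [[c kd] w] [H1 H2]. destruct kd; simpl in *; repeat constructor; simpl; lia.
Qed.

Definition lD (a : mindex) : list nat := let '(a1, a2, a3) := a in repeat 1%nat a1 ++ repeat 2%nat a2 ++ repeat 3%nat a3.
Definition mword (a b : mindex) : list op := map OD (lD a) ++ map OB (lD b).

Lemma iter_repeat o n F : Nat.iter n (opf o) F = apw (repeat o n) F.
Proof. induction n; simpl; auto. rewrite IHn; auto. Qed.

Lemma mixed_apw a b f : mixed a b f = apw (mword a b) f.
Proof.
  destruct a as [[a1 a2] a3], b as [[b1 b2] b3]. unfold mixed, pd_multi, pdbar_multi, pow_op, mword, lD.
  rewrite !map_app, !app_app, !map_repeat.
  change (pd 1) with (opf (OD 1)); change (pd 2) with (opf (OD 2)); change (pd 3) with (opf (OD 3)).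
  change (pdbar 1) with (opf (OB 1)); change (pdbar 2) with (opf (OB 2)); change (pdbar 3) with (opf (OB 3)).
  rewrite !iter_repeat. reflexivity.
Qed.

Lemma lD_length a : length (lD a) = msize a.
Proof. destruct a as [[a1 a2] a3]; simpl. rewrite !length_app, !repeat_length. lia. Qed.

Lemma lD_idx a : List.Forall idx (lD a).
Proof.
  destruct a as [[a1 a2] a3]; simpl. repeat (apply Forall_app; split);
  apply Forall_forall; intros x Hx; apply repeat_spec in Hx; subst; unfold idx; lia.
Qed.

Lemma wok_mword a b : wok (mword a b).
Proof. unfold mword. apply wok_app; [apply wok_mapD|apply wok_mapB]; apply lD_idx. Qed.

Lemma nD_mword a b : nD (mword a b) = msize a.
Proof. unfold mword. rewrite nD_app, nD_mapD, nD_mapB, lD_length. lia. Qed.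
Lemma nB_mword a b : nB (mword a b) = msize b.
Proof. unfold mword. rewrite nB_app, nB_mapD, nB_mapB, lD_length. lia. Qed.

Lemma opf_scal U o F c y : opok o -> Dv U F -> U y -> opf o (fun z => c * F z) y = c * opf o F y.
Proof.
  intros Ho HD Hy. destruct o; simpl in *.
  - apply (pd_scal U); auto.
  - unfold pdbar. rewrite <- sumR_scal. apply sumR_ext; intros j _. rewrite <- sumR_scal.
    apply sumR_ext; intros l Hl. assert (idx l) by (unfold idx3 in Hl; simpl in Hl; unfold idx; intuition lia).
    rewrite (pd_scal U); auto. ring.
Qed.

Definition LC (f : pt -> R) (RL : list (R * list op)) (z : pt) : R :=
  sumR (fun x => fst x * apw (snd x) f z) RL.

Definition Span (Q : list op -> Prop) (w : list op) :=
  exists RL : list (R * list op), List.Forall (fun x => Q (snd x) /\ wok (snd x)) RL /\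
  forall U f, openU U -> Nice U f -> EqOn U (apw w f) (LC f RL).

Lemma Span_single (Q : list op -> Prop) w : Q w -> wok w -> Span Q w.
Proof.
  intros HQ Hw. exists [(1, w)]. split. constructor; auto.
  intros U f HU Hf z Hz. unfold LC, sumR; simpl. ring.
Qed.

Lemma Span_mono (Q Q' : list op -> Prop) w : (forall v, Q v -> Q' v) -> Span Q w -> Span Q' w.
Proof.
  intros H [RL [H1 H2]]. exists RL; split; auto.
  eapply Forall_impl; [|exact H1]. intros x [? ?]; split; auto.
Qed.

Lemma Span_ext Q w w' : (forall U f, openU U -> Nice U f -> EqOn U (apw w f) (apw w' f)) -> Span Q w' -> Span Q w.
Proof.
  intros H [RL [H1 H2]]. exists RL; split; auto. intros U f HU Hf z Hz.
  rewrite (H U f HU Hf z Hz). apply (H2 U f HU Hf z Hz).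
Qed.

Lemma LC_collapse Q : forall RL, (forall x, In x RL -> Span Q (snd x)) ->
  exists RL', List.Forall (fun x => Q (snd x) /\ wok (snd x)) RL' /\
  forall U f, openU U -> Nice U f -> EqOn U (LC f RL) (LC f RL').
Proof.
  induction RL as [|x RL IH]; intros H.
  - exists []; split; [constructor|]. intros; intros z _; reflexivity.
  - destruct IH as [RL0 [H0 E0]]. intros; apply H; simpl; auto.
    destruct (H x (or_introl eq_refl)) as [RLx [Hx Ex]].
    exists (map (fun p => (fst x * fst p, snd p)) RLx ++ RL0). split.
    + apply Forall_app; split; auto. apply Forall_map. eapply Forall_impl; [|exact Hx]. auto.
    + intros U f HU Hf z Hz. change (LC f (x :: RL) z) with (fst x * apw (snd x) f z + LC f RL z).
      rewrite (E0 U f HU Hf z Hz), (Ex U f HU Hf z Hz). unfold LC. rewrite sumR_app, sumR_map.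
      f_equal. rewrite <- sumR_scal. apply sumR_ext; intros; simpl; ring.
Qed.

Lemma Span_trans Q w RL : (forall x, In x RL -> Span Q (snd x)) ->
  (forall U f, openU U -> Nice U f -> EqOn U (apw w f) (LC f RL)) -> Span Q w.
Proof.
  intros H1 H2. destruct (LC_collapse Q RL H1) as [RL' [H3 H4]].
  exists RL'; split; auto. intros U f HU Hf z Hz. rewrite (H2 U f HU Hf z Hz); apply (H4 U f HU Hf z Hz).
Qed.

Lemma Dv_LC U f RL : openU U -> Nice U f -> List.Forall (fun x => wok (snd x)) RL -> Dv U (LC f RL).
Proof.
  intros HU Hf H. unfold LC. apply (Dv_sumR U (fun x z => fst x * apw (snd x) f z)).
  intros x Hx. apply Dv_scal. apply Nice_Dv, Nice_app; auto. rewrite Forall_forall in H; auto.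
Qed.

Lemma opf_LC U o f RL y : openU U -> Nice U f -> opok o -> List.Forall (fun x => wok (snd x)) RL -> U y ->
  opf o (LC f RL) y = LC f (map (fun x => (fst x, o :: snd x)) RL) y.
Proof.
  intros HU Hf Ho H Hy. unfold LC at 1.
  rewrite (opf_sumR U o (fun x z => fst x * apw (snd x) f z)); auto.
  2:{ intros x Hx. apply Dv_scal. apply Nice_Dv, Nice_app; auto. rewrite Forall_forall in H; auto. }
  unfold LC. rewrite sumR_map. apply sumR_ext; intros x Hx. simpl.
  apply (opf_scal U); auto. apply Nice_Dv, Nice_app; auto. rewrite Forall_forall in H; auto.
Qed.

Lemma Span_opf Q o w : opok o -> Span Q w -> Span (fun v => exists v', v = o :: v' /\ Q v') (o :: w).
Proof.
  intros Ho [RL [H1 H2]]. exists (map (fun x => (fst x, o :: snd x)) RL). split.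
  - apply Forall_map. eapply Forall_impl; [|exact H1]. intros x [Hq Hw]; simpl; split; eauto.
    constructor; auto.
  - intros U f HU Hf z Hz. simpl.
    rewrite (opf_EqOn U o _ _ HU (H2 U f HU Hf) z Hz).
    apply (opf_LC U); auto. eapply Forall_impl; [|exact H1]. intros x [_ Hw]; auto.
Qed.

Lemma Span_prefix Q p w : wok p -> Span Q w -> Span (fun v => exists v', v = p ++ v' /\ Q v') (p ++ w).
Proof.
  induction p as [|o p IH]; intros Hp HS; simpl.
  - eapply Span_mono; [|exact HS]. intros v Hv; exists v; auto.
  - inversion Hp; subst. eapply Span_mono; [|apply Span_opf; [auto|apply IH; auto]].
    intros v [v1 [-> [v2 [-> Hq]]]]. exists v2; auto.
Qed.

Lemma Span_suffix Q w w2 : wok w2 -> Span Q w -> Span (fun v => exists v', v = v' ++ w2 /\ Q v') (w ++ w2).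
Proof.
  intros Hw2 [RL [H1 H2]]. exists (map (fun x => (fst x, snd x ++ w2)) RL). split.
  - apply Forall_map. eapply Forall_impl; [|exact H1]. intros x [Hq Hw]; simpl; split; eauto.
    apply wok_app; auto.
  - intros U f HU Hf z Hz. rewrite app_app.
    rewrite (H2 U (apw w2 f) HU (Nice_app U w2 f HU Hw2 Hf) z Hz).
    unfold LC. rewrite sumR_map. apply sumR_ext; intros x _. simpl. rewrite app_app; auto.
Qed.

Lemma Span_bind (Q1 Q : list op -> Prop) w : Span Q1 w -> (forall v, Q1 v -> wok v -> Span Q v) -> Span Q w.
Proof.
  intros [RL [H1 H2]] H. apply (Span_trans Q w RL); auto.
  intros x Hx. rewrite Forall_forall in H1. destruct (H1 x Hx). apply H; auto.
Qed.

Definition addm (m : nat) (a : mindex) : mindex :=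
  let '(a1, a2, a3) := a in
  match m with 1%nat => (S a1, a2, a3) | 2%nat => (a1, S a2, a3) | _ => (a1, a2, S a3) end.

Lemma msize_addm m a : msize (addm m a) = S (msize a).
Proof. destruct a as [[a1 a2] a3]; destruct m as [|[|[|]]]; simpl; lia. Qed.

Lemma CommD m L : idx m -> List.Forall idx L -> forall U f w2, openU U -> Nice U f -> wok w2 ->
  EqOn U (apw (OD m :: map OD L ++ w2) f) (apw (map OD L ++ OD m :: w2) f).
Proof.
  intros Hm. induction L as [|n L IH]; intros HL U f w2 HU Hf Hw2 z Hz; [reflexivity|].
  inversion HL; subst.
  change (apw (OD m :: OD n :: (map OD L ++ w2)) f z = apw (OD n :: (map OD L ++ OD m :: w2)) f z).
  assert (HX : wok (map OD L ++ w2)) by (apply wok_app; auto; apply wok_mapD; auto).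
  rewrite (Sch U f (map OD L ++ w2) m n z HU Hf HX Hz Hm H1). simpl.
  apply (pd_loc U); auto. intros z' Hz'. apply (IH H2 U f w2 HU Hf Hw2 z' Hz').
Qed.

Ltac lsimp := simpl; repeat (rewrite map_app); simpl; repeat (rewrite map_app); simpl; repeat (rewrite map_app); repeat (rewrite <- app_assoc); simpl; repeat (rewrite <- app_assoc); simpl; reflexivity.

Lemma repeat_idx n c : idx c -> List.Forall idx (repeat c n).
Proof. intros H; apply Forall_forall; intros x Hx; apply repeat_spec in Hx; subst; auto. Qed.

Lemma InsD a m : idx m -> forall U f w2, openU U -> Nice U f -> wok w2 ->
  EqOn U (apw (OD m :: map OD (lD a) ++ w2) f) (apw (map OD (lD (addm m a)) ++ w2) f).
Proof.
  intros Hm U f w2 HU Hf Hw2. destruct a as [[a1 a2] a3].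
  assert (I1: idx 1) by (unfold idx; lia). assert (I2: idx 2) by (unfold idx; lia).
  assert (I3: idx 3) by (unfold idx; lia).
  destruct (idx_cases m Hm) as [?|[?|?]]; subst.
  - intros z _; reflexivity.
  - assert (L1: OD 2 :: map OD (lD (a1,a2,a3)) ++ w2 = OD 2 :: map OD (repeat 1%nat a1) ++ (map OD (repeat 2%nat a2) ++ map OD (repeat 3%nat a3) ++ w2)) by lsimp.
    assert (L2: map OD (lD (addm 2 (a1,a2,a3))) ++ w2 = map OD (repeat 1%nat a1) ++ OD 2 :: (map OD (repeat 2%nat a2) ++ map OD (repeat 3%nat a3) ++ w2)) by lsimp.
    rewrite L1, L2. apply CommD; auto. apply repeat_idx; auto.
    apply wok_app; [|apply wok_app]; auto; apply wok_mapD; apply repeat_idx; auto.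
  - assert (L1: OD 3 :: map OD (lD (a1,a2,a3)) ++ w2 = OD 3 :: map OD (repeat 1%nat a1 ++ repeat 2%nat a2) ++ (map OD (repeat 3%nat a3) ++ w2)) by lsimp.
    assert (L2: map OD (lD (addm 3 (a1,a2,a3))) ++ w2 = map OD (repeat 1%nat a1 ++ repeat 2%nat a2) ++ OD 3 :: (map OD (repeat 3%nat a3) ++ w2)) by lsimp.
    rewrite L1, L2. apply CommD; auto. apply Forall_app; split; apply repeat_idx; auto.
    apply wok_app; auto. apply wok_mapD. apply repeat_idx; auto.
Qed.

Lemma SortD L : List.Forall idx L -> exists a, msize a = length L /\
  forall U f w2, openU U -> Nice U f -> wok w2 ->
  EqOn U (apw (map OD L ++ w2) f) (apw (map OD (lD a) ++ w2) f).
Proof.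
  induction L as [|m L IH]; intros HL.
  - exists (0,0,0)%nat; split; auto. intros U f w2 _ _ _ z _; reflexivity.
  - inversion HL; subst. destruct (IH H2) as [a [Ha HE]].
    exists (addm m a); split. rewrite msize_addm; simpl; auto.
    intros U f w2 HU Hf Hw2 z Hz. simpl.
    rewrite (pd_loc U _ (apw (map OD (lD a) ++ w2) f) m z HU (HE U f w2 HU Hf Hw2) Hz).
    apply (InsD a m H1 U f w2 HU Hf Hw2 z Hz).
Qed.

Lemma CommBD i L : idx i -> List.Forall idx L -> forall w2, wok w2 ->
  exists RL : list (R * list nat), List.Forall (fun x => length (snd x) = length L /\ List.Forall idx (snd x)) RL /\
  forall U f, openU U -> Nice U f -> EqOn U (apw (OB i :: map OD L ++ w2) f)
    (fun z => apw (map OD L ++ OB i :: w2) f z + sumR (fun x => fst x * apw (map OD (snd x) ++ w2) f z) RL).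
Proof.
  intros Hi. induction L as [|m L IH]; intros HL w2 Hw2.
  - exists []; split; [constructor|]. intros U f HU Hf z Hz. unfold sumR; simpl; ring.
  - inversion HL; subst. destruct (IH H2 w2 Hw2) as [RL [HRL HE]].
    exists (map (fun x => (fst x, m :: snd x)) RL ++ map (fun l => (- levi i m l, l :: L)) idx3).
    split.
    + apply Forall_app; split.
      * apply Forall_map. eapply Forall_impl; [|exact HRL]. intros x [Hl Hx]; simpl; split; auto.
      * apply Forall_map. apply Forall_forall; intros l Hl; simpl; split; auto. constructor; auto.
        unfold idx3 in Hl; simpl in Hl; unfold idx; intuition lia.
    + intros U f HU Hf z Hz.
      assert (HX : wok (map OD L ++ w2)) by (apply wok_app; auto; apply wok_mapD; auto).
      assert (HX2 : wok (map OD L ++ OB i :: w2)) by (apply wok_app; [apply wok_mapD; auto| constructor; auto]).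
      assert (HDx : forall x, In x RL -> Dv U (fun z => fst x * apw (map OD (snd x) ++ w2) f z)).
      { intros x Hx. apply Dv_scal. apply Nice_Dv, Nice_app; auto. apply wok_app; auto.
        apply wok_mapD. rewrite Forall_forall in HRL. apply HRL; auto. }
      change (apw (OB i :: map OD (m :: L) ++ w2) f z) with (apw (OB i :: OD m :: (map OD L ++ w2)) f z).
      rewrite (LV2 U f _ i m z HU Hf HX Hz Hi H1).
      change (apw (OD m :: OB i :: map OD L ++ w2) f z) with (pd m (apw (OB i :: map OD L ++ w2) f) z).
      rewrite (pd_loc U _ _ m z HU (HE U f HU Hf) Hz).
      rewrite (pd_plus U); auto.
      2:{ apply Nice_Dv, Nice_app; auto. }
      2:{ apply (Dv_sumR U (fun x z => fst x * apw (map OD (snd x) ++ w2) f z)); auto. }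
      rewrite (pd_sumR U (fun x z => fst x * apw (map OD (snd x) ++ w2) f z)); auto.
      rewrite sumR_app, !sumR_map.
      rewrite (sumR_ext (fun x => pd m (fun z0 => fst x * apw (map OD (snd x) ++ w2) f z0) z)
                        (fun x => fst x * apw (map OD (m :: snd x) ++ w2) f z)).
      2:{ intros x Hx. rewrite (pd_scal U); auto. apply Nice_Dv, Nice_app; auto. apply wok_app; auto.
          apply wok_mapD. rewrite Forall_forall in HRL. apply HRL; auto. }
      simpl. ring.
Qed.

Definition QB (n : nat) (v : list op) : Prop := exists c, v = map OB (lD c) /\ (msize c <= n)%nat.

Lemma lD_addm1 c : OB 1 :: map OB (lD c) = map OB (lD (addm 1 c)).
Proof. destruct c as [[c1 c2] c3]; reflexivity. Qed.

Lemma Ins_step b : (forall b', (msize b' < msize b)%nat -> forall i, idx i -> Span (QB (S (msize b'))) (OB i :: map OB (lD b'))) ->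
  forall i, idx i -> Span (QB (S (msize b))) (OB i :: map OB (lD b)).
Proof.
  intros H.
  assert (W : forall c, wok (map OB (lD c))) by (intros; apply wok_mapB; apply lD_idx).
  assert (I1: idx 1) by (unfold idx; lia). assert (I2: idx 2) by (unfold idx; lia).
  assert (I3: idx 3) by (unfold idx; lia).
  assert (G : forall j b1 b2 b3, idx j -> b = (S b1, b2, b3) ->
     Span (QB (S (msize b))) (OB j :: map OB (lD b))).
  { intros j b1 b2 b3 Hj Eb. set (b' := (b1, b2, b3)).
    assert (Hlt : (msize b' < msize b)%nat) by (subst b; simpl; lia).
    assert (Eb' : map OB (lD b) = OB 1 :: map OB (lD b')) by (subst b; reflexivity).
    rewrite Eb'.
    apply (Span_trans _ _ ((1, OB 1 :: OB j :: map OB (lD b')) :: map (fun n => (- levi j 1 n, OB n :: map OB (lD b'))) idx3)).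
    - intros x Hx. destruct Hx as [<-|Hx]; cbn [snd].
      + apply (Span_bind (fun v => exists v', v = OB 1 :: v' /\ QB (S (msize b')) v')).
        * apply Span_opf; auto.
        * intros v [v' [-> [c [-> Hc]]]] _. apply Span_single; [|rewrite lD_addm1; apply W].
          exists (addm 1 c). split. apply lD_addm1. rewrite msize_addm. lia.
      + apply in_map_iff in Hx. destruct Hx as [n [<- Hn]]. cbn [snd].
        assert (idx n) by (unfold idx3 in Hn; simpl in Hn; unfold idx; intuition lia).
        eapply Span_mono; [|apply H; auto]. intros v [c [-> Hc]]; exists c; split; auto; lia.
    - intros U f HU Hf z Hz. rewrite (LB U f _ j 1 z HU Hf (W b') Hz Hj I1).
      unfold LC; simpl; unfold sumR, idx3; simpl; ring. }
  intros i Hi. destruct b as [[b1 b2] b3].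
  destruct b1 as [|b1]; [|apply (G i b1 b2 b3); auto].
  destruct (idx_cases i Hi) as [?|[?|?]]; subst.
  - apply Span_single; [|exact (W (addm 1 (0, b2, b3)%nat))]. exists (addm 1 (0, b2, b3)%nat). split; [reflexivity|]. simpl; lia.
  - apply Span_single; [|exact (W (0, S b2, b3)%nat)]. exists (0, S b2, b3)%nat. split; [reflexivity|]. simpl; lia.
  - destruct b2 as [|b2].
    + apply Span_single; [|exact (W (0, 0, S b3)%nat)]. exists (0, 0, S b3)%nat. split; [reflexivity|]. simpl; lia.
    + set (b' := (0, b2, b3)%nat).
      assert (Hlt : (msize b' < msize (0, S b2, b3)%nat)%nat) by (simpl; lia).
      assert (Eb' : map OB (lD (0, S b2, b3)%nat) = OB 2 :: map OB (lD b')) by reflexivity.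
      rewrite Eb'.
      assert (Ins2 : forall c, (msize c <= msize (0, S b2, b3)%nat)%nat ->
          Span (QB (S (msize c))) (OB 2 :: map OB (lD c))).
      { intros [[c1 c2] c3] Hc. destruct c1 as [|c1].
        - apply Span_single; [|exact (W (0, S c2, c3)%nat)]. exists (0, S c2, c3)%nat. split; [reflexivity|]. simpl; lia.
        - set (c' := (c1, c2, c3)).
          assert (Hlt' : (msize c' < msize (0, S b2, b3)%nat)%nat) by (simpl in *; lia).
          assert (Ec' : map OB (lD (S c1, c2, c3)) = OB 1 :: map OB (lD c')) by reflexivity.
          rewrite Ec'.
          apply (Span_trans _ _ ((1, OB 1 :: OB 2 :: map OB (lD c')) :: map (fun n => (- levi 2 1 n, OB n :: map OB (lD c'))) idx3)).
          + intros x Hx. destruct Hx as [<-|Hx]; cbn [snd].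
            * apply (Span_bind (fun v => exists v', v = OB 1 :: v' /\ QB (S (msize c')) v')).
              -- apply Span_opf; auto.
              -- intros v [v' [-> [d [-> Hd]]]] _. apply Span_single; [|rewrite lD_addm1; apply W].
                 exists (addm 1 d). split. apply lD_addm1. rewrite msize_addm. simpl in *; lia.
            * apply in_map_iff in Hx. destruct Hx as [n [<- Hn]]. cbn [snd].
              assert (idx n) by (unfold idx3 in Hn; simpl in Hn; unfold idx; intuition lia).
              eapply Span_mono; [|apply H; auto]. intros v [d [-> Hd]]; exists d; split; auto; simpl in *; lia.
          + intros U f HU Hf z Hz. rewrite (LB U f _ 2 1 z HU Hf (W c') Hz I2 I1).
            unfold LC; simpl; unfold sumR, idx3; simpl; ring. }
      apply (Span_trans _ _ ((1, OB 2 :: OB 3 :: map OB (lD b')) :: map (fun n => (- levi 3 2 n, OB n :: map OB (lD b'))) idx3)).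
      * intros x Hx. destruct Hx as [<-|Hx]; cbn [snd].
        -- apply (Span_bind (fun v => exists v', v = OB 2 :: v' /\ QB (S (msize b')) v')).
           ++ apply Span_opf; auto.
           ++ intros v [v' [-> [c [-> Hc]]]] _. eapply Span_mono; [|apply Ins2; simpl in *; lia].
              intros v [d [-> Hd]]; exists d; split; auto; simpl in *; lia.
        -- apply in_map_iff in Hx. destruct Hx as [n [<- Hn]]. cbn [snd].
           assert (idx n) by (unfold idx3 in Hn; simpl in Hn; unfold idx; intuition lia).
           eapply Span_mono; [|apply H; auto]. intros v [d [-> Hd]]; exists d; split; auto; simpl in *; lia.
      * intros U f HU Hf z Hz. rewrite (LB U f _ 3 2 z HU Hf (W b') Hz I3 I2).
        unfold LC; simpl; unfold sumR, idx3; simpl; ring.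
Qed.

Lemma InsB : forall n b, (msize b <= n)%nat -> forall i, idx i -> Span (QB (S (msize b))) (OB i :: map OB (lD b)).
Proof.
  induction n; intros b Hb i Hi; apply Ins_step; auto; intros b' Hb'; [lia|].
  intros; apply IHn; auto; lia.
Qed.

Lemma SortB M : List.Forall idx M -> Span (QB (length M)) (map OB M).
Proof.
  induction M as [|i M IH]; intros HM.
  - apply Span_single; [|constructor]. exists (0,0,0)%nat; split; auto.
  - inversion HM; subst. simpl.
    apply (Span_bind (fun v => exists v', v = OB i :: v' /\ QB (length M) v')).
    + apply Span_opf; auto.
    + intros v [v' [-> [c [-> Hc]]]] _. eapply Span_mono; [|apply (InsB (msize c)); auto].
      intros v [d [-> Hd]]; exists d; split; auto; lia.
Qed.

Definition QM (na nb : nat) (v : list op) : Prop := exists a b, v = mword a b /\ msize a = na /\ (msize b <= nb)%nat.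

Lemma Reorder w : wok w -> Span (QM (nD w) (nB w)) w.
Proof.
  induction w as [|o w IH]; intros Hw.
  - apply Span_single; [|constructor]. exists (0,0,0)%nat, (0,0,0)%nat. repeat split; auto.
  - inversion Hw; subst.
    apply (Span_bind (fun v => exists v', v = o :: v' /\ QM (nD w) (nB w) v')).
    + apply Span_opf; auto.
    + intros v [v' [-> [a [b [-> [Ha Hb]]]]]] _. destruct o as [m|i]; simpl in H1 |- *.
      * apply (Span_ext _ _ (mword (addm m a) b)).
        -- intros U f HU Hf. unfold mword.
           apply InsD; auto. apply wok_mapB, lD_idx.
        -- apply Span_single; [|apply wok_mword]. exists (addm m a), b. rewrite msize_addm. repeat split; auto.
      * destruct (CommBD i (lD a) H1 (lD_idx a) (map OB (lD b)) (wok_mapB _ (lD_idx b))) as [RL [HRL HE]].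
        apply (Span_trans _ _ ((1, map OD (lD a) ++ OB i :: map OB (lD b)) ::
                                map (fun x => (fst x, map OD (snd x) ++ map OB (lD b))) RL)).
        -- intros x Hx. destruct Hx as [<-|Hx]; cbn [snd].
           ++ apply (Span_bind (fun v => exists v', v = map OD (lD a) ++ v' /\ QB (S (msize b)) v')).
              ** apply Span_prefix. apply wok_mapD, lD_idx. apply (InsB (msize b)); auto.
              ** intros v [v' [-> [c [-> Hc]]]] _. apply Span_single; [|apply wok_mword].
                 exists a, c. repeat split; auto. lia.
           ++ apply in_map_iff in Hx. destruct Hx as [x' [<- Hx']]. simpl.
              rewrite Forall_forall in HRL. destruct (HRL x' Hx') as [Hl Hid].
              destruct (SortD (snd x') Hid) as [a' [Ha' HE']].
              apply (Span_ext _ _ (mword a' b)).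
              ** intros U f HU Hf. apply HE'; auto. apply wok_mapB, lD_idx.
              ** apply Span_single; [|apply wok_mword]. exists a', b. split; [reflexivity|split].
                 rewrite Ha', Hl, lD_length; auto. simpl; lia.
        -- intros U f HU Hf z Hz. unfold mword at 1. rewrite (HE U f HU Hf z Hz). unfold LC.
           rewrite sumR_cons, sumR_map. cbn [fst snd]. ring.
Qed.

Lemma Rabs_sumR {X} (F : X -> R) l : Rabs (sumR F l) <= sumR (fun x => Rabs (F x)) l.
Proof.
  induction l; simpl. rewrite Rabs_R0; lra.
  unfold sumR in *; simpl. eapply Rle_trans; [apply Rabs_triang|]. lra.
Qed.

Lemma sumR_le {X} (F G : X -> R) l : (forall x, In x l -> F x <= G x) -> sumR F l <= sumR G l.
Proof.
  induction l; intros H; simpl. lra. unfold sumR in *; simpl.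
  assert (F a <= G a) by (apply H; simpl; auto). assert (fold_right (fun a0 acc => F a0 + acc) 0 l <= fold_right (fun a0 acc => G a0 + acc) 0 l) by (apply IHl; intros; apply H; simpl; auto). lra.
Qed.

Lemma sumR_nonneg {X} (F : X -> R) l : (forall x, In x l -> 0 <= F x) -> 0 <= sumR F l.
Proof.
  intros H. replace 0 with (sumR (fun _ : X => 0) l). apply sumR_le; auto.
  induction l; simpl; auto. unfold sumR in *; simpl. rewrite IHl. ring. intros; apply H; simpl; auto.
Qed.

Lemma sumR_elem {X} (F : X -> R) l x : In x l -> (forall x, In x l -> 0 <= F x) -> F x <= sumR F l.
Proof.
  induction l; intros Hx H; simpl in Hx. contradiction.
  unfold sumR in *; simpl. destruct Hx as [->|Hx].
  - assert (0 <= fold_right (fun a0 acc => F a0 + acc) 0 l) by (apply (sumR_nonneg F l); intros; apply H; simpl; auto). lra.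
  - assert (0 <= F a) by (apply H; simpl; auto). assert (F x <= fold_right (fun a0 acc => F a0 + acc) 0 l) by (apply IHl; auto; intros; apply H; simpl; auto). lra.
Qed.

Lemma sumR_seq_mono (F : nat -> R) n m : (n <= m)%nat -> (forall x, 0 <= F x) -> sumR F (seq 0 n) <= sumR F (seq 0 m).
Proof.
  intros H H0. replace m with (n + (m - n))%nat by lia. rewrite seq_app, sumR_app.
  assert (0 <= sumR F (seq (0 + n) (m - n))) by (apply sumR_nonneg; auto). lra.
Qed.

Lemma mindices_in a : In a (mindices (msize a)).
Proof.
  destruct a as [[a1 a2] a3]. unfold mindices. cbn [msize].
  apply in_flat_map. exists a1. split. apply in_seq; lia.
  apply in_map_iff. exists a2. split. f_equal. lia. apply in_seq; lia.
Qed.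

Lemma abs_mixed_nonneg p q f y : 0 <= abs_mixed p q f y.
Proof. unfold abs_mixed. apply sumR_nonneg; intros; apply sumR_nonneg; intros; apply Rabs_pos. Qed.

Lemma mixed_le a b f y : Rabs (mixed a b f y) <= abs_mixed (msize a) (msize b) f y.
Proof.
  unfold abs_mixed.
  eapply Rle_trans; [|apply (sumR_elem _ _ a (mindices_in a))].
  - apply (sumR_elem (fun be => Rabs (mixed a be f y)) _ b (mindices_in b)). intros; apply Rabs_pos.
  - intros; apply sumR_nonneg; intros; apply Rabs_pos.
Qed.

Definition Sfam (p q : nat) f y := sumR (fun j => abs_mixed p j f y) (seq 0 (S q)).

Lemma word_bound w : wok w -> exists K, 0 <= K /\ forall A B f, Nice (in_Omega A B) f ->
  forall y, in_Omega A B y -> Rabs (apw w f y) <= K * Sfam (nD w) (nB w) f y.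
Proof.
  intros Hw. destruct (Reorder w Hw) as [RL [HRL HE]].
  exists (sumR (fun x => Rabs (fst x)) RL). split. apply sumR_nonneg; intros; apply Rabs_pos.
  intros A B f Hf y Hy. rewrite (HE (in_Omega A B) f (open_Omega A B) Hf y Hy). unfold LC.
  eapply Rle_trans; [apply Rabs_sumR|]. rewrite <- (Rmult_comm (Sfam _ _ f y)), <- sumR_scal.
  apply sumR_le. intros x Hx. rewrite Forall_forall in HRL. destruct (HRL x Hx) as [[a [b [Ex [Ha Hb]]]] _].
  rewrite Ex, <- mixed_apw, Rabs_mult.
  rewrite (Rmult_comm (Sfam (nD w) (nB w) f y)). apply Rmult_le_compat_l. apply Rabs_pos.
  eapply Rle_trans; [apply mixed_le|]. rewrite Ha. unfold Sfam.
  apply (sumR_elem (fun j => abs_mixed (nD w) j f y)). apply in_seq; lia.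
  intros; apply abs_mixed_nonneg.
Qed.

Definition alw (a nb : nat) (t : term) : Prop :=
  let '(_, kd, w) := t in
  match kd with
  | KS => nD w = S a /\ (nB w + 1 <= nb)%nat
  | _ => (nD w = a /\ (nB w + 1 <= nb)%nat) \/ ((nD w + 1 = a)%nat /\ (nB w <= nb + 1)%nat)
  end.

Definition S1 A B a nb f y := sumR (fun j => sig_ A B y * abs_mixed (S a) j f y + abs_mixed a j f y) (seq 0 nb).
Definition S2 a nb f y := sumR (fun j => abs_mixed (a - 1) j f y) (seq 0 (nb + 2)).

Lemma sig_pos A B y : 0 < B -> in_Omega A B y -> 0 < sig_ A B y.
Proof.
  intros HB Hy. unfold in_Omega, sig_ in *.
  apply Rmult_lt_compat_l with (r := B) in Hy; auto. unfold Rdiv in Hy.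
  rewrite <- Rmult_assoc, (Rmult_comm B A), Rmult_assoc, Rinv_r in Hy by lra. lra.
Qed.

Lemma AB_pos A B : 0 < A -> 0 < B -> 0 < A / B.
Proof. intros; apply Rdiv_lt_0_compat; auto. Qed.

Lemma coord_bound A B y j : 0 < A -> 0 < B -> in_Omega A B y -> idx j -> Rabs (coord y j) <= 1 + A / B.
Proof.
  intros HA HB Hy Hj. unfold in_Omega, normsq in Hy.
  assert (coord y j ^ 2 < A / B).
  { destruct (idx_cases j Hj) as [?|[?|?]]; subst;
    pose proof (pow2_ge_0 (coord y 1)); pose proof (pow2_ge_0 (coord y 2)); pose proof (pow2_ge_0 (coord y 3)); lra. }
  rewrite <- pow2_abs in H. assert (0 <= Rabs (coord y j)) by apply Rabs_pos. nra.
Qed.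

Lemma S1_nonneg A B a nb f y : 0 < B -> in_Omega A B y -> 0 <= S1 A B a nb f y.
Proof.
  intros HB Hy. unfold S1. apply sumR_nonneg; intros.
  pose proof (sig_pos A B y HB Hy). pose proof (abs_mixed_nonneg (S a) x f y). pose proof (abs_mixed_nonneg a x f y). nra.
Qed.

Lemma S2_nonneg a nb f y : 0 <= S2 a nb f y.
Proof. unfold S2. apply sumR_nonneg; intros; apply abs_mixed_nonneg. Qed.

Lemma term_bound A B a nb t : 0 < A -> 0 < B -> alw a nb t -> tok t ->
  exists C, 0 <= C /\ forall f, Nice (in_Omega A B) f -> forall y, in_Omega A B y ->
  Rabs (tval A B f t y) <= C * S1 A B a nb f y + C * INR a * S2 a nb f y.
Proof.
  intros HA HB Ht Hok. destruct t as [[c kd] w]. destruct Hok as [Hkd Hw].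
  destruct (word_bound w Hw) as [K [HK HKb]].
  assert (HAB := AB_pos A B HA HB).
  exists (Rabs c * (1 + A / B) * K). split.
  { apply Rmult_le_pos; [apply Rmult_le_pos|]; auto; [apply Rabs_pos|lra]. }
  intros f Hf y Hy. unfold tval.
  pose proof (HKb A B f Hf y Hy) as Hb.
  pose proof (S1_nonneg A B a nb f y HB Hy). pose proof (S2_nonneg a nb f y).
  pose proof (sig_pos A B y HB Hy).
  assert (HC : 0 <= Rabs c * (1 + A / B) * K).
  { apply Rmult_le_pos; [apply Rmult_le_pos|]; auto; [apply Rabs_pos|lra]. }
  assert (Ha0 : 0 <= INR a) by apply pos_INR.
  rewrite !Rabs_mult.
  assert (HSf : 0 <= Sfam (nD w) (nB w) f y) by (apply sumR_nonneg; intros; apply abs_mixed_nonneg).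
  assert (Hc : 0 <= Rabs c) by apply Rabs_pos.
  destruct kd; simpl in Ht, Hkd.
  -
    assert (Rabs (kv A B KC y) = 1) by (simpl; apply Rabs_R1). rewrite H2.
    destruct Ht as [[Hd Hn]|[Hd Hn]].
    + assert (Sfam (nD w) (nB w) f y <= S1 A B a nb f y).
      { unfold Sfam, S1. rewrite Hd. eapply Rle_trans.
        apply (sumR_seq_mono (fun j => abs_mixed a j f y) (S (nB w)) nb); [lia|intros; apply abs_mixed_nonneg].
        apply sumR_le; intros. pose proof (abs_mixed_nonneg (S a) x f y). nra. }
      assert (Rabs c * 1 * Rabs (apw w f y) <= Rabs c * (1 + A/B) * K * S1 A B a nb f y).
      { assert (Rabs (apw w f y) <= K * S1 A B a nb f y) by (eapply Rle_trans; [exact Hb|]; apply Rmult_le_compat_l; auto).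
        assert (0 <= K * S1 A B a nb f y) by (apply Rmult_le_pos; auto).
        replace (Rabs c * (1 + A/B) * K * S1 A B a nb f y) with (Rabs c * ((1 + A/B) * (K * S1 A B a nb f y))) by ring.
        rewrite Rmult_1_r. apply Rmult_le_compat_l; auto. nra. }
      assert (0 <= Rabs c * (1 + A / B) * K * INR a * S2 a nb f y) by (repeat apply Rmult_le_pos; auto; lra).
      lra.
    + assert (Hge : (1 <= a)%nat) by lia. assert (Ha1 : 1 <= INR a) by (apply (le_INR 1); auto).
      assert (Sfam (nD w) (nB w) f y <= S2 a nb f y).
      { unfold Sfam, S2. replace (nD w) with (a - 1)%nat by lia.
        apply (sumR_seq_mono (fun j => abs_mixed (a-1) j f y)); [lia|intros; apply abs_mixed_nonneg]. }
      assert (Rabs c * 1 * Rabs (apw w f y) <= Rabs c * (1 + A/B) * K * INR a * S2 a nb f y).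
      { assert (Rabs (apw w f y) <= K * S2 a nb f y) by (eapply Rle_trans; [exact Hb|]; apply Rmult_le_compat_l; auto).
        assert (0 <= K * S2 a nb f y) by (apply Rmult_le_pos; auto).
        replace (Rabs c * (1 + A/B) * K * INR a * S2 a nb f y) with (Rabs c * ((1 + A/B) * INR a * (K * S2 a nb f y))) by ring.
        rewrite Rmult_1_r. apply Rmult_le_compat_l; auto.
        assert (1 <= (1 + A/B) * INR a) by nra. nra. }
      assert (0 <= Rabs c * (1 + A / B) * K * S1 A B a nb f y) by (repeat apply Rmult_le_pos; auto; lra).
      lra.
  -
    assert (Hky : Rabs (kv A B (KY j) y) <= 1 + A/B) by (simpl; apply coord_bound; auto).
    assert (0 <= Rabs (kv A B (KY j) y)) by apply Rabs_pos.
    destruct Ht as [[Hd Hn]|[Hd Hn]].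
    + assert (Sfam (nD w) (nB w) f y <= S1 A B a nb f y).
      { unfold Sfam, S1. rewrite Hd. eapply Rle_trans.
        apply (sumR_seq_mono (fun j => abs_mixed a j f y) (S (nB w)) nb); [lia|intros; apply abs_mixed_nonneg].
        apply sumR_le; intros. pose proof (abs_mixed_nonneg (S a) x f y). nra. }
      assert (Rabs c * Rabs (kv A B (KY j) y) * Rabs (apw w f y) <= Rabs c * (1 + A/B) * K * S1 A B a nb f y).
      { assert (Rabs (apw w f y) <= K * S1 A B a nb f y) by (eapply Rle_trans; [exact Hb|]; apply Rmult_le_compat_l; auto).
        assert (0 <= K * S1 A B a nb f y) by (apply Rmult_le_pos; auto).
        replace (Rabs c * (1 + A/B) * K * S1 A B a nb f y) with (Rabs c * ((1 + A/B) * (K * S1 A B a nb f y))) by ring.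
        rewrite Rmult_assoc. apply Rmult_le_compat_l; auto.
        apply Rmult_le_compat; auto. apply Rabs_pos. }
      assert (0 <= Rabs c * (1 + A / B) * K * INR a * S2 a nb f y) by (repeat apply Rmult_le_pos; auto; lra).
      lra.
    + assert (Hge : (1 <= a)%nat) by lia. assert (Ha1 : 1 <= INR a) by (apply (le_INR 1); auto).
      assert (Sfam (nD w) (nB w) f y <= S2 a nb f y).
      { unfold Sfam, S2. replace (nD w) with (a - 1)%nat by lia.
        apply (sumR_seq_mono (fun j => abs_mixed (a-1) j f y)); [lia|intros; apply abs_mixed_nonneg]. }
      assert (Rabs c * Rabs (kv A B (KY j) y) * Rabs (apw w f y) <= Rabs c * (1 + A/B) * K * INR a * S2 a nb f y).
      { assert (Rabs (apw w f y) <= K * S2 a nb f y) by (eapply Rle_trans; [exact Hb|]; apply Rmult_le_compat_l; auto).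
        assert (0 <= K * S2 a nb f y) by (apply Rmult_le_pos; auto).
        replace (Rabs c * (1 + A/B) * K * INR a * S2 a nb f y) with (Rabs c * (((1 + A/B) * INR a) * (K * S2 a nb f y))) by ring.
        rewrite Rmult_assoc. apply Rmult_le_compat_l; auto.
        apply Rmult_le_compat; auto. apply Rabs_pos. nra. }
      assert (0 <= Rabs c * (1 + A / B) * K * S1 A B a nb f y) by (repeat apply Rmult_le_pos; auto; lra).
      lra.
  -
    destruct Ht as [Hd Hn].
    assert (Hks : Rabs (kv A B KS y) = sig_ A B y) by (simpl; apply Rabs_right; lra). rewrite Hks.
    assert (sig_ A B y * Sfam (nD w) (nB w) f y <= S1 A B a nb f y).
    { unfold Sfam, S1. rewrite Hd, <- sumR_scal. eapply Rle_trans.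
      apply (sumR_seq_mono (fun j => sig_ A B y * abs_mixed (S a) j f y) (S (nB w)) nb); [lia|].
      intros; pose proof (abs_mixed_nonneg (S a) x f y); nra.
      apply sumR_le; intros. pose proof (abs_mixed_nonneg a x f y). lra. }
    assert (Rabs c * sig_ A B y * Rabs (apw w f y) <= Rabs c * (1 + A/B) * K * S1 A B a nb f y).
    { assert (sig_ A B y * Rabs (apw w f y) <= K * S1 A B a nb f y).
      { eapply Rle_trans. apply Rmult_le_compat_l; [lra|exact Hb].
        replace (sig_ A B y * (K * Sfam (nD w) (nB w) f y)) with (K * (sig_ A B y * Sfam (nD w) (nB w) f y)) by ring.
        apply Rmult_le_compat_l; auto. }
      assert (0 <= K * S1 A B a nb f y) by (apply Rmult_le_pos; auto).
      replace (Rabs c * (1 + A/B) * K * S1 A B a nb f y) with (Rabs c * ((1 + A/B) * (K * S1 A B a nb f y))) by ring.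
      rewrite Rmult_assoc. apply Rmult_le_compat_l; auto. nra. }
    assert (0 <= Rabs c * (1 + A / B) * K * INR a * S2 a nb f y) by (repeat apply Rmult_le_pos; auto; lra).
    lra.
Qed.

Lemma TL_bound A B a nb TL : 0 < A -> 0 < B -> List.Forall (fun t => alw a nb t /\ tok t) TL ->
  exists C, 0 <= C /\ forall f, Nice (in_Omega A B) f -> forall y, in_Omega A B y ->
  Rabs (TLval A B f TL y) <= C * S1 A B a nb f y + C * INR a * S2 a nb f y.
Proof.
  intros HA HB H. induction H as [|t TL [Ht Hok] _ IH].
  - exists 0; split; [lra|]. intros f _ y _. unfold TLval, sumR; simpl. rewrite Rabs_R0. lra.
  - destruct IH as [C0 [HC0 H0]]. destruct (term_bound A B a nb t HA HB Ht Hok) as [C1 [HC1 H1]].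
    exists (C1 + C0); split; [lra|]. intros f Hf y Hy.
    change (TLval A B f (t :: TL) y) with (tval A B f t y + TLval A B f TL y).
    eapply Rle_trans; [apply Rabs_triang|].
    pose proof (H0 f Hf y Hy); pose proof (H1 f Hf y Hy). lra.
Qed.

Lemma Rp_lemma A B H q k y : 0 < B -> in_Omega A B y -> Dv (in_Omega A B) H -> idx k ->
  Rpower (sig_ A B y) (- q) * pd k (fun w => Rpower (sig_ A B w) (q + 1) * H w) y =
  (q + 1) * (-2 * B * coord y k) * H y + sig_ A B y * pd k H y.
Proof.
  intros HB Hy HD Hk. pose proof (sig_pos A B y HB Hy) as Hs.
  assert (E1 : derivable_pt_lim (comp (fun x => Rpower x (q + 1)) (fun t => sig_ A B (shift y k t))) 0
               ((q + 1) * Rpower (sig_ A B y) (q + 1 - 1) * (-2 * B * coord y k))).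
  { apply derivable_pt_lim_comp. apply sig_line_lim; auto.
    rewrite shift0. apply derivable_pt_lim_power; auto. }
  pose proof (derivable_pt_lim_mult _ (fun t => H (shift y k t)) 0 _ _ E1 (pd_lim _ H y k HD Hy Hk)) as E2.
  rewrite (pd_spec _ _ _ _ E2). unfold comp; rewrite shift0.
  replace (q + 1 - 1) with q by ring.
  rewrite Rmult_plus_distr_l.
  replace (Rpower (sig_ A B y) (- q) * ((q + 1) * Rpower (sig_ A B y) q * (-2 * B * coord y k) * H y))
    with ((Rpower (sig_ A B y) (- q) * Rpower (sig_ A B y) q) * ((q + 1) * (-2 * B * coord y k) * H y)) by ring.
  replace (Rpower (sig_ A B y) (- q) * (Rpower (sig_ A B y) (q + 1) * pd k H y))
    with ((Rpower (sig_ A B y) (- q) * Rpower (sig_ A B y) (q + 1)) * pd k H y) by ring.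
  rewrite <- !Rpower_plus. replace (- q + q) with 0 by ring. replace (- q + (q + 1)) with 1 by ring.
  rewrite Rpower_O, Rpower_1 by auto. ring.
Qed.

Lemma dTs_app B w X Y : dTs B w (X ++ Y) = dTs B w X ++ dTs B w Y.
Proof. induction w; simpl; auto. rewrite IHw, flat_map_app; auto. Qed.

Lemma main_k iota A B al be k : 0 < iota -> 0 < A -> 0 < B -> idx k ->
  exists C, 0 <= C /\ forall f, smooth_on A B f -> forall y, in_Omega A B y ->
  Rabs (mixed al be
            (fun z => Rpower (sig_ A B z) (- iota) *
                      pd k (fun w => Rpower (sig_ A B w) (iota + 1) * f w) z) y
          - Rpower (sig_ A B y) (- iota - INR (msize al)) *
            pd k (fun w => Rpower (sig_ A B w) (iota + INR (msize al) + 1)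
                           * mixed al be f w) y)
  <= C * S1 A B (msize al) (msize be) f y + C * INR (msize al) * S2 (msize al) (msize be) f y.
Proof.
  intros Hi HA HB Hk.
  set (La := lD al). set (M := lD be).
  assert (HLa : List.Forall idx La) by apply lD_idx.
  assert (HM : List.Forall idx M) by apply lD_idx.
  destruct (TeleB iota A B k Hk M [] HM (List.Forall_nil _)) as [TLB [HshB [HokB HEB]]].
  assert (HW : wok (map OB M ++ [])) by (rewrite app_nil_r; apply wok_mapB; auto).
  destruct (TeleD iota A B k Hk La (map OB M ++ []) 0 HLa HW) as [TLE [HshE [HokE HEE]]].
  assert (Hall : List.Forall (fun t => alw (msize al) (msize be) t /\ tok t) (TLE ++ dTs B (map OD La) TLB)).
  { apply Forall_app; split.
    - rewrite Forall_forall in HshE, HokE |- *. intros [[c kd] w] Ht. split; auto.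
      destruct (HshE _ Ht) as [-> [H1 H2]]. simpl.
      rewrite nD_app, nB_app, nD_mapB, nB_mapB in *. simpl in *. unfold La, M in *. rewrite lD_length in *.
      right; split; lia.
    - assert (HI : List.Forall (shI (msize be) 0) TLB).
      { eapply Forall_impl; [|exact HshB]. intros [[c kd] w] [H1 H2]. simpl in *.
        unfold M in H1; rewrite lD_length in H1. split; [lia|]. destruct kd; auto; contradiction. }
      pose proof (shI_dTs B (msize be) La 0 TLB HI) as HI2.
      pose proof (dTs_ok B (map OD La) TLB (wok_mapD _ HLa) HokB) as Hok2.
      rewrite Forall_forall in HI2, Hok2 |- *. intros [[c kd] w] Ht. split; auto.
      pose proof (HI2 _ Ht) as [H1 H2]. unfold La in H2; rewrite lD_length, Nat.add_0_r in H2.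
      destruct kd; simpl in *; [right; split; lia | left; split; lia | split; lia]. }
  destruct (TL_bound A B (msize al) (msize be) _ HA HB Hall) as [C [HC HCb]].
  exists C; split; auto. intros f Hsm y Hy.
  set (U := in_Omega A B). assert (HU : openU U) by apply open_Omega.
  assert (Hf : Nice U f) by (apply Nice_f; auto).
  set (F0 := fun z => Rpower (sig_ A B z) (- iota) * pd k (fun w => Rpower (sig_ A B w) (iota + 1) * f w) z).
  assert (E0 : EqOn U F0 (TLval A B f (Dterm iota B k 0 []))).
  { intros z Hz. unfold F0. rewrite (Rp_lemma A B f iota k z HB Hz (Nice_Dv _ _ Hf) Hk).
    unfold TLval, Dterm, sumR, tval, kv; simpl. ring. }
  assert (E1 : EqOn U (apw (map OB M) F0) (TLval A B f (Dterm iota B k 0 (map OB M ++ []) ++ TLB))).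
  { intros z Hz. rewrite (app_EqOn U _ _ _ HU E0 z Hz). rewrite TLval_app.
    apply (HEB U f HU Hf z Hz). }
  assert (HokX : List.Forall tok (Dterm iota B k 0 (map OB M ++ []) ++ TLB)).
  { apply Forall_app; split; auto. apply dTs_Dterm_ok; auto. }
  assert (E2 : mixed al be F0 y = TLval A B f (Dterm iota B k (0 + length La) (map OD La ++ map OB M ++ [])) y
                                  + TLval A B f TLE y + TLval A B f (dTs B (map OD La) TLB) y).
  { rewrite mixed_apw. unfold mword. fold La M. rewrite app_app.
    rewrite (app_EqOn U _ _ _ HU E1 y Hy).
    rewrite (app_TL U A B f (map OD La) _ HU Hf (wok_mapD _ HLa) HokX y Hy).
    rewrite dTs_app, TLval_app.
    rewrite <- (app_TL U A B f (map OD La) _ HU Hf (wok_mapD _ HLa) (dTs_Dterm_ok iota B k 0 _ Hk HW) y Hy).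
    rewrite (HEE U f HU Hf y Hy). ring. }
  assert (E3 : Rpower (sig_ A B y) (- iota - INR (msize al)) *
            pd k (fun w => Rpower (sig_ A B w) (iota + INR (msize al) + 1) * mixed al be f w) y =
            TLval A B f (Dterm iota B k (0 + length La) (map OD La ++ map OB M ++ [])) y).
  { replace (- iota - INR (msize al)) with (- (iota + INR (msize al))) by ring.
    rewrite (Rp_lemma A B (mixed al be f) (iota + INR (msize al)) k y HB Hy); auto.
    2:{ rewrite mixed_apw. apply Nice_Dv, Nice_app; auto. apply wok_mword. }
    rewrite app_nil_r. unfold La. rewrite lD_length. simpl Nat.add.
    rewrite mixed_apw. unfold TLval, Dterm, sumR, tval, kv; simpl fold_right.
    unfold mword. fold La M. cbn [apw opf]. ring. }
  fold F0. rewrite E2, E3.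
  replace (TLval A B f (Dterm iota B k (0 + length La) (map OD La ++ map OB M ++ [])) y +
     TLval A B f TLE y + TLval A B f (dTs B (map OD La) TLB) y -
     TLval A B f (Dterm iota B k (0 + length La) (map OD La ++ map OB M ++ [])) y)
   with (TLval A B f (TLE ++ dTs B (map OD La) TLB) y) by (rewrite TLval_app; ring).
  apply HCb; auto.
Qed.

Theorem mainTheorem8 :
  forall (iota A B : R), 0 < iota -> 0 < A -> 0 < B ->
  forall (al be : mindex),
  exists C : R,
  forall f : pt -> R, smooth_on A B f ->
  forall k : nat, (1 <= k <= 3)%nat ->
  forall y : pt, in_Omega A B y ->
    Rabs (mixed al be
            (fun z => Rpower (sig_ A B z) (- iota) *
                      pd k (fun w => Rpower (sig_ A B w) (iota + 1) * f w) z) y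
          - Rpower (sig_ A B y) (- iota - INR (msize al)) *
            pd k (fun w => Rpower (sig_ A B w) (iota + INR (msize al) + 1)
                           * mixed al be f w) y)
    <= C * sumR (fun j => sig_ A B y * abs_mixed (S (msize al)) j f y
                          + abs_mixed (msize al) j f y) (seq 0 (msize be))
       + C * INR (msize al) *
         sumR (fun j => abs_mixed (msize al - 1) j f y) (seq 0 (msize be + 2)).
Proof.
  intros iota A B Hi HA HB al be.
  assert (I1: idx 1) by (unfold idx; lia). assert (I2: idx 2) by (unfold idx; lia).
  assert (I3: idx 3) by (unfold idx; lia).
  destruct (main_k iota A B al be 1 Hi HA HB I1) as [C1 [HC1 H1]].
  destruct (main_k iota A B al be 2 Hi HA HB I2) as [C2 [HC2 H2]].
  destruct (main_k iota A B al be 3 Hi HA HB I3) as [C3 [HC3 H3]].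
  exists (C1 + C2 + C3). intros f Hf k Hk y Hy.
  pose proof (S1_nonneg A B (msize al) (msize be) f y HB Hy) as P1.
  pose proof (S2_nonneg (msize al) (msize be) f y) as P2.
  pose proof (pos_INR (msize al)) as P3.
  change (sumR (fun j => sig_ A B y * abs_mixed (S (msize al)) j f y + abs_mixed (msize al) j f y) (seq 0 (msize be)))
    with (S1 A B (msize al) (msize be) f y).
  change (sumR (fun j => abs_mixed (msize al - 1) j f y) (seq 0 (msize be + 2)))
    with (S2 (msize al) (msize be) f y).
  assert (Q : 0 <= INR (msize al) * S2 (msize al) (msize be) f y) by (apply Rmult_le_pos; auto).
  destruct (idx_cases k Hk) as [E|[E|E]]; subst k.
  - pose proof (H1 f Hf y Hy). nra.
  - pose proof (H2 f Hf y Hy). nra.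
  - pose proof (H3 f Hf y Hy). nra.
Qed.
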